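(* Let $n\ge 2$, let $g_*$ be the standard metric on $\mathbb{S}^n$, and for $i=1,2$ let $f_i:[a_i,b_i]\to\mathbb{R}^+$ be smooth positive functions. Suppose that (i) the metrics $\gamma_i:=dt^2+f_i(t)^2g_*$ on $[a_i,b_i]\times\mathbb{S}^n$ have positive scalar curvature; (ii) $f_1(b_1)<f_2(a_2)$; (iii) $1>f_1'(b_1)>0$ and $f_1'(b_1)\ge f_2'(a_2)>-1$. Then, after translating the intervals so that $$(a_2-b_1)f_1'(b_1)=f_2(a_2)-f_1(b_1)\quad\text{if } f_1'(b_1)=f_2'(a_2),$$ $$(a_2-b_1)f_1'(b_1)>f_2(a_2)-f_1(b_1)>(a_2-b_1)f_2'(a_2)\quad\text{if } f_1'(b_1)>f_2'(a_2),$$ one can construct a smooth positive function $f:[a_1,b_2]\to\mathbb{R}^+$ such that (I) $f\equiv f_1$ on $[a_1,\frac{a_1+b_1}{2}]$ and $f\equiv f_2$ on $[\frac{a_2+b_2}{2},b_2]$, and (II) $\gamma:=dt^2+f(t)^2g_*$ has positive scalar curvature on $[a_1,b_2]\times\mathbb{S}^n$. Moreover, if $f_i'>0$ on $[a_i,b_i]$ for $i=1,2$, then $f$ can be constructed such that $f'>0$ on $[a_1,b_2]$. *)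

(* Defs.v *)
From Stdlib Require Import Reals.
From Coquelicot Require Import Coquelicot.
Open Scope R_scope.

(* f : R -> R is smooth on the closed interval [a,b]: it is (the restriction of)
   a function with derivatives of all orders on an open neighbourhood of [a,b]. *)
Definition smooth_on (a b : R) (f : R -> R) : Prop :=
  exists eps : R, 0 < eps /\
    forall (k : nat) (x : R), a - eps < x < b + eps -> ex_derive_n f k x.

Definition positive_on (a b : R) (f : R -> R) : Prop :=
  forall t, a <= t <= b -> 0 < f t.

(* Scalar curvature at (t, theta) of the warped product metric
   dt^2 + f(t)^2 g_* on an interval times the round sphere S^n
   (standard formula; it does not depend on theta):
   R = -2n f''/f + n(n-1)(1 - f'^2)/f^2. *)
Definition warped_scal (n : nat) (f : R -> R) (t : R) : R :=
  - 2 * INR n * Derive_n f 2 t / f t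
  + INR n * (INR n - 1) * (1 - (Derive f t) ^ 2) / (f t) ^ 2.

Definition psc_on (n : nat) (a b : R) (f : R -> R) : Prop :=
  forall t, a <= t <= b -> 0 < warped_scal n f t.

(* Main.v *)
Require Import Defs.
From Stdlib Require Import Reals Lra Lia Psatz.
From Coquelicot Require Import Coquelicot.
Open Scope R_scope.

Lemma loc_int (l r x : R) : l < x < r -> locally x (fun y => l < y < r).
Proof.
  intros H. apply (locally_interval _ x (Finite l) (Finite r)); simpl; intros; lra.
Qed.

Lemma isd_plus (f g : R -> R) (x df dg : R) : is_derive f x df -> is_derive g x dg ->
  is_derive (fun t => f t + g t) x (df + dg).
Proof. intros H1 H2. exact (is_derive_plus f g x df dg H1 H2). Qed.

Lemma isd_mult (f g : R -> R) (x df dg : R) : is_derive f x df -> is_derive g x dg ->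
  is_derive (fun t => f t * g t) x (df * g x + f x * dg).
Proof. intros H1 H2. exact (is_derive_mult f g x df dg H1 H2 Rmult_comm). Qed.

Lemma isd_const (a x : R) : is_derive (fun _ => a) x 0.
Proof. exact (is_derive_const a x). Qed.

Lemma isd_id (x : R) : is_derive (fun t => t) x 1.
Proof. exact (is_derive_id x). Qed.

Lemma isd_comp (f g : R -> R) (x df dg : R) : is_derive f (g x) df -> is_derive g x dg ->
  is_derive (fun t => f (g t)) x (dg * df).
Proof. intros H1 H2. exact (is_derive_comp f g x df dg H1 H2). Qed.

Lemma isd_eq (f : R -> R) (x l l' : R) : is_derive f x l -> l = l' -> is_derive f x l'.
Proof. intros H ->; exact H. Qed.

Lemma dbound (g dg : R -> R) (a b lo hi : R) : a <= b ->
  (forall x, a <= x <= b -> is_derive g x (dg x)) ->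
  (forall x, a <= x <= b -> lo <= dg x <= hi) ->
  lo * (b - a) <= g b - g a <= hi * (b - a).
Proof.
  intros Hab Hd Hb.
  destruct (MVT_gen g a b dg) as [c [Hc Heq]].
  - intros x Hx. apply Hd. rewrite Rmin_left in Hx by lra. rewrite Rmax_right in Hx by lra. lra.
  - intros x Hx. rewrite Rmin_left in Hx by lra. rewrite Rmax_right in Hx by lra.
    apply continuity_pt_filterlim. apply (ex_derive_continuous (K:=R_AbsRing) (V:=R_NormedModule)). exists (dg x). apply Hd. lra.
  - rewrite Rmin_left in Hc by lra. rewrite Rmax_right in Hc by lra.
    rewrite Heq. specialize (Hb c Hc). split; apply Rmult_le_compat_r; lra.
Qed.

Lemma dzero (g dg : R -> R) (a b : R) : a <= b ->
  (forall x, a <= x <= b -> is_derive g x (dg x)) ->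
  (forall x, a <= x <= b -> dg x = 0) -> g b = g a.
Proof.
  intros Hab Hd Hz. pose proof (dbound g dg a b 0 0 Hab Hd) as H.
  assert (H2: forall x, a <= x <= b -> 0 <= dg x <= 0) by (intros x Hx; rewrite Hz; lra).
  specialize (H H2). lra.
Qed.

Definition smo (l r : R) (f : R -> R) := forall k x, l < x < r -> ex_derive_n f k x.

Lemma Dn_S f k x : Derive_n f (S k) x = Derive_n (Derive f) k x.
Proof.
  rewrite <- Nat.add_1_r. rewrite <- (Derive_n_comp f k 1 x). reflexivity.
Qed.

Lemma exn_of_deriv_lvl l r f g k : (forall x, l<x<r -> is_derive f x (g x)) ->
  (forall x, l<x<r -> ex_derive_n g k x) -> forall x, l<x<r -> ex_derive_n f (S k) x.
Proof.
  intros Hd Hg x Hx. destruct k as [|k].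
  - simpl. exists (g x). apply Hd; exact Hx.
  - simpl. apply ex_derive_ext with (Derive_n (Derive f) k).
    { intros t. symmetry. apply Dn_S. }
    change (ex_derive_n (Derive f) (S k) x).
    apply ex_derive_n_ext_loc with g.
    + generalize (loc_int l r x Hx). apply filter_imp. intros y Hy.
      symmetry. apply is_derive_unique. apply Hd. exact Hy.
    + apply Hg. exact Hx.
Qed.

Lemma smo_of_deriv l r f g : (forall x, l<x<r -> is_derive f x (g x)) -> smo l r g -> smo l r f.
Proof.
  intros Hd Hg k x Hx. destruct k as [|k]. exact I.
  apply (exn_of_deriv_lvl l r f g k Hd); [|exact Hx]. intros y Hy; apply Hg; exact Hy.
Qed.

Lemma smo_D l r f : smo l r f -> smo l r (Derive f).
Proof.
  intros H k x Hx. destruct k as [|k]. exact I.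
  simpl. apply ex_derive_ext with (Derive_n f (S k)).
  { intros t. apply Dn_S. }
  exact (H (S (S k)) x Hx).
Qed.

Lemma smo_isd l r f x : smo l r f -> l < x < r -> is_derive f x (Derive f x).
Proof.
  intros H Hx. apply Derive_correct. exact (H 1%nat x Hx).
Qed.

Lemma smo_cont l r f x : smo l r f -> l < x < r -> continuous f x.
Proof.
  intros H Hx. apply (ex_derive_continuous (K:=R_AbsRing) (V:=R_NormedModule)). exact (H 1%nat x Hx).
Qed.

Lemma smo_loc l r f x n : smo l r f -> l < x < r ->
  locally x (fun y => forall k, (k <= n)%nat -> ex_derive_n f k y).
Proof.
  intros H Hx. generalize (loc_int l r x Hx). apply filter_imp.
  intros y Hy k _. apply H; exact Hy.
Qed.

Lemma smo_plus l r f g : smo l r f -> smo l r g -> smo l r (fun x => f x + g x).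
Proof.
  intros Hf Hg k x Hx. apply ex_derive_n_plus; eapply smo_loc; eauto.
Qed.

Lemma smo_scal l r (a : R) f : smo l r f -> smo l r (fun x => a * f x).
Proof. intros Hf k x Hx. apply ex_derive_n_scal_l. apply Hf; exact Hx. Qed.

Lemma smo_const l r (a : R) : smo l r (fun _ => a).
Proof. intros k x Hx. apply ex_derive_n_const. Qed.

Lemma smo_ext l r f g : (forall x, l < x < r -> f x = g x) -> smo l r f -> smo l r g.
Proof.
  intros He Hf k x Hx. apply ex_derive_n_ext_loc with f.
  - generalize (loc_int l r x Hx). apply filter_imp. intros y Hy; apply He; exact Hy.
  - apply Hf; exact Hx.
Qed.

Lemma smo_sub l r l' r' f : l <= l' -> r' <= r -> smo l r f -> smo l' r' f.
Proof. intros H1 H2 H k x Hx. apply H. lra. Qed.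

Lemma smo_mult l r f g : smo l r f -> smo l r g -> smo l r (fun x => f x * g x).
Proof.
  assert (H: forall n f g, smo l r f -> smo l r g -> forall k x, (k <= n)%nat -> l < x < r ->
     ex_derive_n (fun x => f x * g x) k x).
  { induction n as [|n IH]; intros f0 g0 Hf Hg k x Hk Hx.
    - assert (k = 0%nat) by lia. subst. exact I.
    - destruct k as [|k]. exact I.
      destruct k as [|k].
      + simpl. apply ex_derive_mult. exact (Hf 1%nat x Hx). exact (Hg 1%nat x Hx).
      + simpl. apply ex_derive_ext with (Derive_n (Derive (fun x => f0 x * g0 x)) k).
        { intros t. symmetry. apply Dn_S. }
        change (ex_derive_n (Derive (fun x => f0 x * g0 x)) (S k) x).
        apply ex_derive_n_ext_loc with (fun y => Derive f0 y * g0 y + f0 y * Derive g0 y).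
        { generalize (loc_int l r x Hx). apply filter_imp. intros y Hy.
          symmetry. apply Derive_mult. exact (Hf 1%nat y Hy). exact (Hg 1%nat y Hy). }
        apply ex_derive_n_plus.
        * generalize (loc_int l r x Hx). apply filter_imp. intros y Hy j Hj.
          apply IH; auto. apply smo_D; exact Hf. lia.
        * generalize (loc_int l r x Hx). apply filter_imp. intros y Hy j Hj.
          apply IH; auto. apply smo_D; exact Hg. lia. }
  intros Hf Hg k x Hx. apply (H k f g Hf Hg k x (le_n k) Hx).
Qed.

Definition gsm (f : R -> R) := forall k x, ex_derive_n f k x.

Lemma gsm_smo l r f : gsm f -> smo l r f.
Proof. intros H k x _. apply H. Qed.

Lemma smo_gsm f : (forall l r, smo l r f) -> gsm f.
Proof. intros H k x. apply (H (x-1) (x+1)). lra. Qed.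

Lemma gsm_aff f (a b : R) : gsm f -> gsm (fun y => f (a * y + b)).
Proof.
  intros H k x.
  apply (ex_derive_n_comp_scal (fun z => f (z + b)) a k x).
  apply filter_forall. intros z j _. apply ex_derive_n_comp_trans. apply H.
Qed.

Lemma isd_ext (f g : R -> R) (x l : R) : (forall t, f t = g t) -> is_derive f x l -> is_derive g x l.
Proof. intros H1 H2. exact (is_derive_ext f g x l H1 H2). Qed.

Lemma le_divr (a c w : R) : 0 < w -> a * w <= c -> a <= c / w.
Proof.
  intros Hw H. assert (0 < /w) by (apply Rinv_0_lt_compat; auto).
  unfold Rdiv. replace a with (a * w * /w) by (field; lra). apply Rmult_le_compat_r; lra.
Qed.

Lemma divr_le (a c w : R) : 0 < w -> c <= a * w -> c / w <= a.
Proof.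
  intros Hw H. assert (0 < /w) by (apply Rinv_0_lt_compat; auto).
  unfold Rdiv. replace a with (a * w * /w) by (field; lra). apply Rmult_le_compat_r; lra.
Qed.
Local Open Scope list_scope.

Lemma exp_ge_pow m y : 0 <= y -> y ^ m / INR (Factorial.fact m) <= exp y.
Proof.
  intros Hy. pose proof (exp_ge_taylor y m Hy) as H.
  destruct m as [|m].
  - simpl in H. simpl. exact H.
  - rewrite tech5 in H.
    assert (0 <= sum_f_R0 (fun k => y ^ k / INR (Factorial.fact k)) m).
    { apply cond_pos_sum. intros k. apply Rdiv_le_0_compat. apply pow_le; lra.
      apply lt_0_INR. apply Factorial.lt_O_fact. }
    lra.
Qed.

Lemma pexp_lim m : forall eps, 0 < eps -> exists Y, 0 < Y /\ forall y, Y < y -> Rabs (y^m * exp (-y)) < eps.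
Proof.
  intros eps He. set (F := INR (Factorial.fact (S m))).
  assert (HF: 0 < F) by (apply lt_0_INR; apply Factorial.lt_O_fact).
  exists (F / eps). split. apply Rdiv_lt_0_compat; lra.
  intros y Hy.
  assert (Hy0: 0 < y). { apply Rlt_trans with (F/eps); auto. apply Rdiv_lt_0_compat; lra. }
  pose proof (exp_ge_pow (S m) y (Rlt_le _ _ Hy0)) as HE. fold F in HE.
  rewrite exp_Ropp. rewrite Rabs_right.
  2:{ apply Rle_ge. apply Rmult_le_pos. apply pow_le; lra. left; apply Rinv_0_lt_compat, exp_pos. }
  assert (Hym: 0 < y ^ m) by (apply pow_lt; lra).
  assert (Hex: 0 < exp y) by apply exp_pos.
  apply Rmult_lt_reg_r with (exp y); auto.
  rewrite Rmult_assoc, Rinv_l by lra. rewrite Rmult_1_r.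
  assert (H1: y ^ S m <= F * exp y).
  { unfold Rdiv in HE. apply Rmult_le_compat_l with (r := F) in HE; [|lra].
    rewrite <- Rmult_assoc, (Rmult_comm F), Rmult_assoc, Rinv_r, Rmult_1_r in HE by lra. exact HE. }
  simpl in H1.
  assert (H2: F < eps * y).
  { apply Rmult_lt_compat_r with (r := eps) in Hy; auto. unfold Rdiv in Hy.
    rewrite Rmult_assoc, Rinv_l, Rmult_1_r in Hy by lra. lra. }
  (* y * y^m <= F * exp y < eps * y * exp y *)
  assert (H3: y * y ^ m < y * (eps * exp y)).
  { apply Rle_lt_trans with (F * exp y); auto.
    replace (y * (eps * exp y)) with ((eps * y) * exp y) by ring.
    apply Rmult_lt_compat_r; auto. }
  apply Rmult_lt_reg_l in H3; auto.
Qed.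

Fixpoint pe (p : list R) (y : R) : R :=
  match p with nil => 0 | a :: q => a + y * pe q y end.

Fixpoint padd (p q : list R) : list R :=
  match p, q with
  | nil, _ => q
  | _, nil => p
  | a :: p', b :: q' => (a + b) :: padd p' q'
  end.

Lemma pe_add p q y : pe (padd p q) y = pe p y + pe q y.
Proof.
  revert q; induction p as [|a p IH]; intros q; simpl. ring.
  destruct q as [|b q]; simpl. ring. rewrite IH. ring.
Qed.

Definition pscal (c : R) (p : list R) := List.map (Rmult c) p.

Lemma pe_scal c p y : pe (pscal c p) y = c * pe p y.
Proof. induction p as [|a p IH]; simpl. ring. fold (pscal c p). rewrite IH. ring. Qed.

Fixpoint pd (p : list R) : list R :=
  match p with nil => nil | a :: q => padd q (0 :: pd q) end.

Lemma pe_der p y : is_derive (pe p) y (pe (pd p) y).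
Proof.
  induction p as [|a p IH]; simpl.
  - apply isd_const.
  - apply isd_eq with (0 + (1 * pe p y + y * pe (pd p) y)).
    apply isd_plus. apply isd_const. apply isd_mult. apply isd_id. exact IH.
    rewrite pe_add. simpl. ring.
Qed.

Lemma poly_lim p : forall m eps, 0 < eps -> exists Y, 0 < Y /\
  forall y, Y < y -> Rabs (y^m * pe p y * exp (-y)) < eps.
Proof.
  induction p as [|a p IH]; intros m eps He.
  - exists 1. split. lra. intros y _. simpl. rewrite Rmult_0_r, Rmult_0_l, Rabs_R0. exact He.
  - destruct (pexp_lim m (eps / 2 / (Rabs a + 1))) as [Y1 [HY1 H1]].
    { apply Rdiv_lt_0_compat. lra. pose proof (Rabs_pos a). lra. }
    destruct (IH (S m) (eps/2)) as [Y2 [HY2 H2]]. lra.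
    exists (Rmax Y1 Y2). split. apply Rlt_le_trans with Y1; auto. apply Rmax_l.
    intros y Hy. simpl pe.
    replace (y ^ m * (a + y * pe p y) * exp (- y)) with (a * (y^m * exp (-y)) + y ^ S m * pe p y * exp (-y)) by (simpl; ring).
    eapply Rle_lt_trans. apply Rabs_triang.
    rewrite Rabs_mult.
    assert (Ha: Rabs a * Rabs (y ^ m * exp (- y)) <= eps / 2).
    { assert (HH: Rabs (y ^ m * exp (- y)) < eps / 2 / (Rabs a + 1)).
      { apply H1. apply Rle_lt_trans with (Rmax Y1 Y2); auto. apply Rmax_l. }
      pose proof (Rabs_pos a). pose proof (Rabs_pos (y ^ m * exp (- y))).
      apply (Rmult_lt_compat_r (Rabs a + 1)) in HH; [|lra].
      replace (eps / 2 / (Rabs a + 1) * (Rabs a + 1)) with (eps/2) in HH by (field; lra).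
      nra. }
    assert (Hb: Rabs (y ^ S m * pe p y * exp (- y)) < eps / 2).
    { apply H2. apply Rle_lt_trans with (Rmax Y1 Y2); auto. apply Rmax_r. }
    lra.
Qed.

Definition EP (p : list R) (x : R) : R :=
  if Rlt_dec 0 x then pe p (/x) * exp (- / x) else 0.

Definition qq (p : list R) : list R := 0 :: 0 :: padd p (pscal (-1) (pd p)).

Lemma EP_der p x : is_derive (EP p) x (EP (qq p) x).
Proof.
  destruct (Rlt_dec 0 x) as [Hx|Hx].
  - apply is_derive_ext_loc with (fun t => pe p (/t) * exp (- / t)).
    { generalize (loc_int 0 (x+1) x ltac:(lra)). apply filter_imp. intros y Hy.
      unfold EP. destruct (Rlt_dec 0 y); [reflexivity|lra]. }
    assert (Hinv: is_derive (fun t => / t) x (- 1 / x ^ 2)).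
    { apply (is_derive_inv (fun t => t) x 1). apply isd_id. lra. }
    unfold EP. destruct (Rlt_dec 0 x); [|lra].
    eapply isd_eq.
    + apply isd_mult.
      * apply (isd_comp (pe p) (fun t => / t)). apply pe_der. exact Hinv.
      * apply (isd_comp exp (fun t => - / t)). apply is_derive_exp.
        apply (is_derive_opp (fun t => / t)). exact Hinv.
    + unfold qq. simpl pe. rewrite pe_add, pe_scal. simpl. unfold opp; simpl. field. lra.
  - destruct (Rlt_dec x 0) as [Hn|Hn].
    + apply is_derive_ext_loc with (fun _ => 0).
      { generalize (loc_int (x-1) 0 x ltac:(lra)). apply filter_imp. intros y Hy.
        unfold EP. destruct (Rlt_dec 0 y); [lra|reflexivity]. }
      unfold EP. destruct (Rlt_dec 0 x); [lra|]. apply isd_const.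
    + assert (x = 0) by lra. subst x.
      unfold EP at 2. destruct (Rlt_dec 0 0); [lra|].
      apply is_derive_Reals. intros eps He.
      destruct (poly_lim p 1 eps He) as [Y [HY HYl]].
      assert (Hd: 0 < / Y) by (apply Rinv_0_lt_compat; lra).
      exists (mkposreal _ Hd). intros h Hh0 Hh. simpl in Hh.
      rewrite Rplus_0_l. unfold EP. destruct (Rlt_dec 0 0); [lra|].
      destruct (Rlt_dec 0 h) as [Hp|Hp].
      * rewrite Rabs_right in Hh by lra.
        specialize (HYl (/ h)).
        assert (HyY: Y < / h).
        { apply Rmult_lt_reg_l with h; auto. rewrite Rinv_r by lra.
          apply Rmult_lt_compat_r with (r := Y) in Hh; auto. rewrite Rinv_l in Hh by lra. lra. }
        specialize (HYl HyY).
        replace ((pe p (/ h) * exp (- / h) - 0) / h - 0) with ((/ h) ^ 1 * pe p (/ h) * exp (- / h)) by (field; lra).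
        exact HYl.
      * replace ((0 - 0) / h - 0) with 0 by (field; lra). rewrite Rabs_R0. exact He.
Qed.

Lemma EP_gsm : forall k p x, ex_derive_n (EP p) k x.
Proof.
  induction k as [|k IH]; intros p x. exact I.
  apply (exn_of_deriv_lvl (x-1) (x+1) (EP p) (EP (qq p)) k).
  - intros y _. apply EP_der.
  - intros y _. apply IH.
  - lra.
Qed.

Definition E (x : R) : R := EP (1 :: nil) x.

Lemma E_gsm : gsm E.
Proof. intros k x. apply EP_gsm. Qed.

Lemma E_pos x : 0 < x -> E x = exp (- / x).
Proof. intros H. unfold E, EP. destruct (Rlt_dec 0 x); [simpl; ring|lra]. Qed.

Lemma E_neg x : x <= 0 -> E x = 0.
Proof. intros H. unfold E, EP. destruct (Rlt_dec 0 x); [lra|reflexivity]. Qed.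

Lemma E_bnd x : 0 <= E x <= 1.
Proof.
  destruct (Rlt_dec 0 x) as [H|H].
  - rewrite E_pos by auto. split. left; apply exp_pos.
    rewrite <- exp_0. left. apply exp_increasing.
    assert (0 < / x) by (apply Rinv_0_lt_compat; auto). lra.
  - rewrite E_neg by lra. lra.
Qed.

Lemma E_lb x : 1/4 <= x -> exp (-4) <= E x.
Proof.
  intros H. rewrite E_pos by lra.
  destruct (Req_dec x (1/4)) as [->|Hne].
  - right. f_equal. field.
  - left. apply exp_increasing.
    assert (/ x < 4).
    { apply Rmult_lt_reg_l with x. lra. rewrite Rinv_r by lra. lra. }
    lra.
Qed.

Definition bump (u : R) : R := E u * E (1 - u).

Lemma bump_gsm : gsm bump.
Proof.
  apply smo_gsm. intros l r. unfold bump. apply smo_mult.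
  apply gsm_smo, E_gsm.
  apply gsm_smo. apply smo_gsm. intros l' r'.
  apply smo_ext with (fun u => E ((-1) * u + 1)).
  { intros x _. f_equal. ring. }
  apply gsm_smo. apply gsm_aff. apply E_gsm.
Qed.

Lemma bump_bnd u : 0 <= bump u <= 1.
Proof.
  unfold bump. pose proof (E_bnd u). pose proof (E_bnd (1-u)). nra.
Qed.

Lemma bump_out u : (u <= 0 \/ 1 <= u) -> bump u = 0.
Proof.
  unfold bump. intros [H|H]. rewrite E_neg by lra. ring. rewrite (E_neg (1-u)) by lra. ring.
Qed.

Definition k0 := exp (-4) * exp (-4).

Lemma k0_pos : 0 < k0.
Proof. unfold k0. pose proof (exp_pos (-4)). nra. Qed.

Lemma bump_lb u : 1/4 <= u <= 3/4 -> k0 <= bump u.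
Proof.
  intros H. unfold bump, k0. pose proof (E_lb u ltac:(lra)). pose proof (E_lb (1-u) ltac:(lra)).
  pose proof (exp_pos (-4)). nra.
Qed.

Lemma antider (g : R -> R) (a lo hi : R) : lo < a < hi ->
  (forall z, lo < z < hi -> continuous g z) ->
  forall x, lo < x < hi -> is_derive (fun t => RInt g a t) x (g x).
Proof.
  intros Ha Hc x Hx.
  apply (is_derive_RInt g (fun t => RInt g a t) a x).
  - generalize (loc_int lo hi x Hx). apply filter_imp. intros b Hb.
    apply (RInt_correct (V:=R_CompleteNormedModule)).
    apply (ex_RInt_continuous (V:=R_CompleteNormedModule)). intros z Hz. apply Hc.
    split.
    + apply Rlt_le_trans with (Rmin a b). apply Rmin_glb_lt; lra. apply Hz.
    + apply Rle_lt_trans with (Rmax a b). apply Hz. apply Rmax_lub_lt; lra.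
  - apply Hc. exact Hx.
Qed.

Lemma antider_g (g : R -> R) (a : R) : (forall z, continuous g z) ->
  forall x, is_derive (fun t => RInt g a t) x (g x).
Proof.
  intros Hc x. apply (antider g a (Rmin a x - 1) (Rmax a x + 1)).
  - split. apply Rlt_le_trans with (Rmin a x). lra. apply Rmin_l.
    apply Rle_lt_trans with (Rmax a x). apply Rmax_l. lra.
  - intros z _; apply Hc.
  - split. apply Rlt_le_trans with (Rmin a x). lra. apply Rmin_r.
    apply Rle_lt_trans with (Rmax a x). apply Rmax_r. lra.
Qed.

Lemma RInt_pt (g : R -> R) (a : R) : RInt g a a = 0.
Proof. apply (RInt_point (V:=R_CompleteNormedModule)). Qed.

Lemma gsm_cont f x : gsm f -> continuous f x.
Proof. intros H. apply (smo_cont (x-1) (x+1)). apply gsm_smo; auto. lra. Qed.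

Lemma gsm_antider (g : R -> R) (a : R) : gsm g -> gsm (fun t => RInt g a t).
Proof.
  intros H. apply smo_gsm. intros l r. apply smo_of_deriv with g.
  intros x _. apply antider_g. intros z; apply gsm_cont; auto.
  apply gsm_smo; auto.
Qed.

Definition Sb (x : R) := RInt bump 0 x.
Definition m0 := Sb 1.

Lemma Sb_der x : is_derive Sb x (bump x).
Proof. apply antider_g. intros z; apply gsm_cont, bump_gsm. Qed.

Lemma Sb_neg x : x <= 0 -> Sb x = 0.
Proof.
  intros H. assert (Sb 0 = Sb x).
  { apply (dzero Sb bump x 0 H). intros y _; apply Sb_der. intros y Hy. apply bump_out. lra. }
  unfold Sb in *. rewrite RInt_pt in H0. lra.
Qed.

Lemma Sb_big x : 1 <= x -> Sb x = m0.
Proof.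
  intros H. apply (dzero Sb bump 1 x H). intros y _; apply Sb_der. intros y Hy. apply bump_out. lra.
Qed.

Lemma Sb_mono x y : x <= y -> Sb x <= Sb y.
Proof.
  intros H. pose proof (dbound Sb bump x y 0 1 H (fun z _ => Sb_der z) (fun z _ => bump_bnd z)). nra.
Qed.

Lemma m0_lb : k0 / 2 <= m0.
Proof.
  pose proof (dbound Sb bump (1/4) (3/4) k0 1 ltac:(lra) (fun z _ => Sb_der z)) as H.
  assert (H2: forall x, 1/4 <= x <= 3/4 -> k0 <= bump x <= 1).
  { intros x Hx. split. apply bump_lb; lra. apply bump_bnd. }
  specialize (H H2).
  pose proof (Sb_mono 0 (1/4) ltac:(lra)). pose proof (Sb_mono (3/4) 1 ltac:(lra)).
  rewrite Sb_neg in H0 by lra. unfold m0. lra.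
Qed.

Lemma m0_pos : 0 < m0.
Proof. pose proof m0_lb. pose proof k0_pos. lra. Qed.

Definition St (x : R) := Sb x / m0.

Lemma St_der x : is_derive St x (bump x / m0).
Proof.
  unfold St. apply isd_eq with (/ m0 * bump x).
  - apply (isd_ext (fun t => / m0 * Sb t)).
    + intros t. unfold Rdiv; ring.
    + apply is_derive_scal. apply Sb_der.
  - unfold Rdiv; ring.
Qed.

Lemma St_gsm : gsm St.
Proof.
  apply smo_gsm. intros l r. apply smo_of_deriv with (fun x => / m0 * bump x).
  intros x _. apply isd_eq with (bump x / m0). apply St_der. unfold Rdiv; ring.
  apply smo_scal. apply gsm_smo, bump_gsm.
Qed.

Lemma St_neg x : x <= 0 -> St x = 0.
Proof. intros H. unfold St. rewrite Sb_neg by auto. unfold Rdiv; ring. Qed.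

Lemma St_big x : 1 <= x -> St x = 1.
Proof. intros H. unfold St. rewrite Sb_big by auto. field. pose proof m0_pos; lra. Qed.

Lemma St_bnd x : 0 <= St x <= 1.
Proof.
  unfold St. pose proof m0_pos.
  pose proof (Sb_mono 0 x). pose proof (Sb_mono x 1).
  destruct (Rle_dec 0 x); destruct (Rle_dec x 1).
  - rewrite Sb_neg in H0 by lra. split. apply Rdiv_le_0_compat; lra.
    apply Rmult_le_reg_r with m0; auto. unfold Rdiv. rewrite Rmult_assoc, Rinv_l by lra. unfold m0 in *. lra.
  - rewrite Sb_big by lra. split. apply Rdiv_le_0_compat; lra. right; field; lra.
  - rewrite Sb_neg by lra. split; unfold Rdiv; rewrite Rmult_0_l; lra.
  - lra.
Qed.

Definition Bf (p w s : R) := bump ((s - p) / w).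

Lemma Bf_gsm p w : gsm (Bf p w).
Proof.
  apply smo_gsm. intros l r. apply smo_ext with (fun s => bump ((/w) * s + (- p / w))).
  { intros x _. unfold Bf. f_equal. unfold Rdiv. ring. }
  apply gsm_smo, gsm_aff, bump_gsm.
Qed.

Lemma Bf_bnd p w s : 0 <= Bf p w s <= 1.
Proof. apply bump_bnd. Qed.

Lemma Bf_out p w s : 0 < w -> (s <= p \/ p + w <= s) -> Bf p w s = 0.
Proof.
  intros Hw H. unfold Bf. apply bump_out. destruct H as [H|H].
  - left. apply divr_le; auto; lra.
  - right. apply le_divr; auto; lra.
Qed.

Lemma Bf_lb p w s : 0 < w -> p + w/4 <= s <= p + 3*w/4 -> k0 <= Bf p w s.
Proof.
  intros Hw H. unfold Bf. apply bump_lb. split.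
  - apply le_divr; auto; lra.
  - apply divr_le; auto; lra.
Qed.

Definition SBf (b p w t : R) := RInt (Bf p w) b t.
Definition SSf (b p w t : R) := RInt (SBf b p w) b t.

Section BumpInt.
Variables (b p w : R).
Hypothesis (Hw : 0 < w) (Hbp : b < p).

Lemma SB_der x : is_derive (SBf b p w) x (Bf p w x).
Proof. apply antider_g. intros z; apply gsm_cont, Bf_gsm. Qed.

Lemma SB_gsm : gsm (SBf b p w).
Proof. apply gsm_antider, Bf_gsm. Qed.

Lemma SB_cont x : continuous (SBf b p w) x.
Proof. apply gsm_cont, SB_gsm. Qed.

Lemma SS_der x : is_derive (SSf b p w) x (SBf b p w x).
Proof. apply antider_g. intros z; apply SB_cont. Qed.

Lemma SS_gsm : gsm (SSf b p w).
Proof. apply gsm_antider, SB_gsm. Qed.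

Lemma SB_mono x y : x <= y -> SBf b p w x <= SBf b p w y.
Proof.
  intros H. pose proof (dbound _ _ x y 0 1 H (fun z _ => SB_der z) (fun z _ => Bf_bnd p w z)). nra.
Qed.

Lemma SB_low x : x <= p -> SBf b p w x = 0.
Proof.
  intros H. destruct (Rle_dec x b) as [Hx|Hx].
  - assert (SBf b p w b = SBf b p w x).
    { apply (dzero _ (Bf p w) x b Hx). intros y _; apply SB_der. intros y Hy. apply Bf_out; auto; lra. }
    unfold SBf in *. rewrite RInt_pt in H0. lra.
  - assert (SBf b p w x = SBf b p w b).
    { apply (dzero _ (Bf p w) b x ltac:(lra)). intros y _; apply SB_der. intros y Hy. apply Bf_out; auto; lra. }
    unfold SBf in *. rewrite RInt_pt in H0. lra.
Qed.

Definition WW := SBf b p w (p + w).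

Lemma SB_high x : p + w <= x -> SBf b p w x = WW.
Proof.
  intros H. apply (dzero _ (Bf p w) (p+w) x H). intros y _; apply SB_der. intros y Hy. apply Bf_out; auto; lra.
Qed.

Lemma WW_lb : k0 * w / 2 <= WW.
Proof.
  pose proof (dbound _ _ (p + w/4) (p + 3*w/4) k0 1 ltac:(lra) (fun z _ => SB_der z)) as H.
  assert (H2: forall x, p + w/4 <= x <= p + 3*w/4 -> k0 <= Bf p w x <= 1).
  { intros x Hx. split. apply Bf_lb; auto. apply Bf_bnd. }
  specialize (H H2).
  pose proof (SB_mono p (p + w/4) ltac:(lra)). pose proof (SB_mono (p + 3*w/4) (p+w) ltac:(lra)).
  rewrite SB_low in H0 by lra. unfold WW. lra.
Qed.

Lemma WW_pos : 0 < WW.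
Proof. pose proof WW_lb. pose proof k0_pos. assert (0 < k0 * w / 2) by (unfold Rdiv; nra). lra. Qed.

Lemma SB_bnd x : 0 <= SBf b p w x <= WW.
Proof.
  destruct (Rle_dec x p).
  - rewrite SB_low by auto. pose proof WW_pos. lra.
  - destruct (Rle_dec (p+w) x).
    + rewrite SB_high by auto. pose proof WW_pos. lra.
    + split. rewrite <- (SB_low p) by lra. apply SB_mono; lra.
      unfold WW. apply SB_mono; lra.
Qed.

Lemma SS_low x : x <= p -> SSf b p w x = 0.
Proof.
  intros H. destruct (Rle_dec x b) as [Hx|Hx].
  - assert (SSf b p w b = SSf b p w x).
    { apply (dzero _ (SBf b p w) x b Hx). intros y _; apply SS_der. intros y Hy. apply SB_low; lra. }
    unfold SSf in *. rewrite RInt_pt in H0. lra.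
  - assert (SSf b p w x = SSf b p w b).
    { apply (dzero _ (SBf b p w) b x ltac:(lra)). intros y _; apply SS_der. intros y Hy. apply SB_low; lra. }
    unfold SSf in *. rewrite RInt_pt in H0. lra.
Qed.

Lemma SS_lb x : p + w <= x -> WW * (x - p - w) <= SSf b p w x.
Proof.
  intros H.
  pose proof (dbound _ _ (p+w) x WW WW H (fun z _ => SS_der z)) as Hd.
  assert (H2: forall z, p + w <= z <= x -> WW <= SBf b p w z <= WW).
  { intros z Hz. rewrite SB_high by lra. lra. }
  specialize (Hd H2).
  pose proof (dbound _ _ p (p+w) 0 WW ltac:(lra) (fun z _ => SS_der z) (fun z _ => SB_bnd z)) as Hd2.
  rewrite (SS_low p) in Hd2 by lra. lra.
Qed.

Lemma SS_ub x : p <= x -> 0 <= SSf b p w x <= WW * (x - p).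
Proof.
  intros H.
  pose proof (dbound _ _ p x 0 WW H (fun z _ => SS_der z) (fun z _ => SB_bnd z)) as Hd.
  rewrite (SS_low p) in Hd by lra. lra.
Qed.

Lemma SS_bnd x : b <= x -> 0 <= SSf b p w x <= WW * (x - b).
Proof.
  intros H.
  pose proof (dbound _ _ b x 0 WW H (fun z _ => SS_der z) (fun z _ => SB_bnd z)) as Hd.
  unfold SSf in *. rewrite RInt_pt in Hd. lra.
Qed.

End BumpInt.

Lemma smo_D2 l r f : smo l r f -> smo l r (Derive_n f 2).
Proof. intros H. apply smo_ext with (Derive (Derive f)). intros; reflexivity. apply smo_D, smo_D, H. Qed.

Lemma smo_isd2 l r f x : smo l r f -> l < x < r -> is_derive (Derive f) x (Derive_n f 2 x).
Proof. intros H Hx. apply (smo_isd l r (Derive f)). apply smo_D; auto. auto. Qed.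

Lemma mul01 (P B X : R) : 0 <= B <= 1 -> P <= X -> 0 <= X -> P * B <= X.
Proof. intros. destruct (Rle_dec P 0); nra. Qed.

Lemma mulub (F u A K : R) : 0 < F <= A -> u <= K -> 0 <= K -> F * u <= A * K.
Proof. intros. destruct (Rle_dec u 0); nra. Qed.

Section Core.
Variables (n : nat) (f1 f2 : R -> R) (a2 b1 e c w dl l0 ta tb : R).
Let D1 := Derive f1 b1.
Let D2 := Derive f2 a2.
Let C1 := Derive_n f1 2 b1.
Let C2 := Derive_n f2 2 a2.
Let N := INR n - 1.
Let L := a2 - b1.
Let M1 := Rabs C1 + 1.
Let M2 := Rabs C2 + 1.
Let p1 := c - 2 * w.
Let p2 := c + w.
Let W1 := WW b1 p1 w.
Let W2 := WW b1 p2 w.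
Let Kp := (M1 + M2) * L / w * (/ W1 + / W2).
Let mm := Rmax D1 (- D2).

Hypothesis HN : 1 <= N.
Hypothesis HL : b1 < a2.
Hypothesis He : 0 < e.
Hypothesis Hs1 : smo (b1 - e) (b1 + e) f1.
Hypothesis Hs2 : smo (a2 - e) (a2 + e) f2.
Hypothesis Hp1 : 0 < f1 b1.
Hypothesis Hf : f1 b1 < f2 a2.
Hypothesis HD1 : 0 < D1 < 1.
Hypothesis HD2 : -1 < D2 <= D1.
Hypothesis Hc : b1 < c < a2.
Hypothesis Hcc : (f2 a2 - f1 b1) - D1 * (a2 - b1) = (D2 - D1) * (a2 - c).
Hypothesis Hw : 0 < w.
Hypothesis Hw1 : b1 + w <= c - 2 * w.
Hypothesis Hw2 : c + 2 * w <= a2 - w.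
Hypothesis Hdl : 0 < dl <= w.
Hypothesis Hdle : dl < e.
Hypothesis Hta : 0 < ta <= 1 /\ forall x y z phi, Rabs (x - f1 b1) <= ta -> Rabs (y - D1) <= ta ->
  z <= C1 + ta -> 0 <= phi <= 1 -> 0 < x /\ Rabs y < 1 /\ 0 < N * (1 - y^2) - 2 * x * (phi * z).
Hypothesis Htb : 0 < tb <= 1 /\ forall x y z phi, Rabs (x - f2 a2) <= tb -> Rabs (y - D2) <= tb ->
  z <= C2 + tb -> 0 <= phi <= 1 -> 0 < x /\ Rabs y < 1 /\ 0 < N * (1 - y^2) - 2 * x * (phi * z).
Hypothesis Heta1 : forall s, b1 <= s <= b1 + dl -> Rabs (Derive_n f1 2 s - C1) <= ta.
Hypothesis Heta2 : forall s, a2 - dl <= s <= a2 -> Rabs (Derive_n f2 2 s - C2) <= tb.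
Hypothesis Hd1 : dl * M1 <= ta /\ dl * (Rabs D1 + L * M1) <= ta.
Hypothesis Hd2 : dl * M2 <= tb /\ dl * 2 <= tb.
Hypothesis Hd3 : dl * (2 * (M1 + M2) + Kp * (W1 + W2)) <= (1 - mm) / 2.
Hypothesis Hd3' : dl * (2 * (M1 + M2) + Kp * (W1 + W2)) < D2 - l0.
Hypothesis Hd4 : dl * Kp * (2 * (f1 b1 + L)) < N * (1 - ((1 + mm) / 2) ^ 2).
Hypothesis Hd5 : dl * (L * (M1 + M2) + Kp * (W1 + W2) * L) <= f1 b1 / 2.

Let lo := b1 - e.
Let hi := a2 + e.

Lemma Hbp1 : b1 < p1. Proof. unfold p1; lra. Qed.
Lemma Hbp2 : b1 < p2. Proof. unfold p2; lra. Qed.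
Lemma W1pos : 0 < W1. Proof. apply WW_pos; auto. apply Hbp1. Qed.
Lemma W2pos : 0 < W2. Proof. apply WW_pos; auto. apply Hbp2. Qed.

Definition phi1 (s : R) := 1 - St ((s - b1) / dl).
Definition phi2 (s : R) := St ((s - (a2 - dl)) / dl).

Lemma phi1_gsm : gsm phi1.
Proof.
  apply smo_gsm; intros l r. unfold phi1.
  apply smo_plus. apply smo_const.
  apply smo_ext with (fun s => (-1) * St ((/dl) * s + (- b1 / dl))).
  { intros x _. unfold Rdiv. replace ((x - b1) * / dl) with (/ dl * x + - b1 * / dl) by ring. ring. }
  apply smo_scal. apply gsm_smo, gsm_aff, St_gsm.
Qed.

Lemma phi2_gsm : gsm phi2.
Proof.
  apply smo_gsm; intros l r. unfold phi2.
  apply smo_ext with (fun s => St ((/dl) * s + (- (a2 - dl) / dl))).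
  { intros x _. f_equal. unfold Rdiv. ring. }
  apply gsm_smo, gsm_aff, St_gsm.
Qed.

Lemma phi1_bnd s : 0 <= phi1 s <= 1.
Proof. unfold phi1. pose proof (St_bnd ((s - b1) / dl)). lra. Qed.
Lemma phi2_bnd s : 0 <= phi2 s <= 1.
Proof. unfold phi2. apply St_bnd. Qed.

Lemma phi1_low s : s <= b1 -> phi1 s = 1.
Proof. intros H. unfold phi1. rewrite St_neg. ring. apply divr_le; lra. Qed.
Lemma phi1_high s : b1 + dl <= s -> phi1 s = 0.
Proof. intros H. unfold phi1. rewrite St_big. ring. apply le_divr; lra. Qed.
Lemma phi2_low s : s <= a2 - dl -> phi2 s = 0.
Proof. intros H. unfold phi2. apply St_neg. apply divr_le; lra. Qed.
Lemma phi2_high s : a2 <= s -> phi2 s = 1.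
Proof. intros H. unfold phi2. apply St_big. apply le_divr; lra. Qed.

Definition T1 (s : R) := phi1 s * Derive_n f1 2 s.
Definition T2 (s : R) := phi2 s * Derive_n f2 2 s.

Lemma T1_smo : smo lo hi T1.
Proof.
  intros k x Hx. destruct (Rlt_dec x (b1 + e)) as [H|H].
  - apply (smo_mult (b1 - e) (b1 + e) phi1 (Derive_n f1 2)).
    apply gsm_smo, phi1_gsm. apply smo_D2, Hs1. unfold lo in Hx. lra.
  - apply ex_derive_n_ext_loc with (fun _ => 0).
    + generalize (loc_int (b1 + dl) (x + 1) x ltac:(lra)). apply filter_imp. intros y Hy.
      unfold T1. rewrite phi1_high by lra. ring.
    + apply ex_derive_n_const.
Qed.

Lemma T2_smo : smo lo hi T2.
Proof.
  intros k x Hx. destruct (Rlt_dec (a2 - e) x) as [H|H].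
  - apply (smo_mult (a2 - e) (a2 + e) phi2 (Derive_n f2 2)).
    apply gsm_smo, phi2_gsm. apply smo_D2, Hs2. unfold hi in Hx. lra.
  - apply ex_derive_n_ext_loc with (fun _ => 0).
    + generalize (loc_int (x - 1) (a2 - dl) x ltac:(lra)). apply filter_imp. intros y Hy.
      unfold T2. rewrite phi2_low by lra. ring.
    + apply ex_derive_n_const.
Qed.

Lemma b1_in : lo < b1 < hi. Proof. unfold lo, hi; lra. Qed.

Definition G1 (t : R) := RInt T1 b1 t.
Definition G2 (t : R) := RInt T2 b1 t.
Definition H1 (t : R) := RInt G1 b1 t.
Definition H2 (t : R) := RInt G2 b1 t.

Lemma G1_der x : lo < x < hi -> is_derive G1 x (T1 x).
Proof. apply antider. apply b1_in. intros z Hz. apply (smo_cont lo hi); auto. apply T1_smo. Qed.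
Lemma G2_der x : lo < x < hi -> is_derive G2 x (T2 x).
Proof. apply antider. apply b1_in. intros z Hz. apply (smo_cont lo hi); auto. apply T2_smo. Qed.
Lemma G1_smo : smo lo hi G1.
Proof. apply smo_of_deriv with T1. apply G1_der. apply T1_smo. Qed.
Lemma G2_smo : smo lo hi G2.
Proof. apply smo_of_deriv with T2. apply G2_der. apply T2_smo. Qed.
Lemma H1_der x : lo < x < hi -> is_derive H1 x (G1 x).
Proof. apply antider. apply b1_in. intros z Hz. apply (smo_cont lo hi); auto. apply G1_smo. Qed.
Lemma H2_der x : lo < x < hi -> is_derive H2 x (G2 x).
Proof. apply antider. apply b1_in. intros z Hz. apply (smo_cont lo hi); auto. apply G2_smo. Qed.
Lemma H1_smo : smo lo hi H1.
Proof. apply smo_of_deriv with G1. apply H1_der. apply G1_smo. Qed.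
Lemma H2_smo : smo lo hi H2.
Proof. apply smo_of_deriv with G2. apply H2_der. apply G2_smo. Qed.

Lemma G1_b1 : G1 b1 = 0. Proof. apply RInt_pt. Qed.
Lemma G2_b1 : G2 b1 = 0. Proof. apply RInt_pt. Qed.
Lemma H1_b1 : H1 b1 = 0. Proof. apply RInt_pt. Qed.
Lemma H2_b1 : H2 b1 = 0. Proof. apply RInt_pt. Qed.

Definition B1 := Bf p1 w.
Definition B2 := Bf p2 w.
Definition S1 := SBf b1 p1 w.
Definition S2 := SBf b1 p2 w.
Definition Z1 := SSf b1 p1 w.
Definition Z2 := SSf b1 p2 w.

Definition Iq := G1 a2 + G2 a2.
Definition R2 := (f2 a2 - f1 b1) - D1 * L - H1 a2 - H2 a2.
Definition R20 := (D2 - D1) * (a2 - c).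
Definition X1 := Z1 a2.
Definition X2 := Z2 a2.
Definition det := W1 * X2 - W2 * X1.
Definition sp := D2 - D1 - Iq.
Definition s0 := D2 - D1.
Definition P := (sp * X2 - W2 * R2) / det.
Definition Q := (W1 * R2 - sp * X1) / det.
Definition P0 := (s0 * X2 - W2 * R20) / det.
Definition Q0 := (W1 * R20 - s0 * X1) / det.

Definition F (t : R) := f1 b1 + D1 * (t - b1) + H1 t + H2 t + P * Z1 t + Q * Z2 t.
Definition F1 (t : R) := D1 + G1 t + G2 t + P * S1 t + Q * S2 t.
Definition F2 (t : R) := T1 t + T2 t + P * B1 t + Q * B2 t.
Definition F0 (t : R) := f1 b1 + D1 * (t - b1) + P0 * Z1 t + Q0 * Z2 t.
Definition F01 (t : R) := D1 + P0 * S1 t + Q0 * S2 t.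

Lemma isd_lin (x : R) : is_derive (fun t => D1 * (t - b1)) x (D1 * 1).
Proof.
  apply is_derive_scal. apply (isd_ext (fun t => t + (- b1))). intros; ring.
  apply isd_eq with (1 + 0). apply isd_plus. apply isd_id. apply isd_const. ring.
Qed.

Lemma F_der x : lo < x < hi -> is_derive F x (F1 x).
Proof.
  intros Hx. unfold F, F1.
  apply isd_eq with (0 + D1 * 1 + G1 x + G2 x + P * S1 x + Q * S2 x).
  2: ring.
  apply isd_plus; [|apply is_derive_scal; apply SS_der].
  apply isd_plus; [|apply is_derive_scal; apply SS_der].
  apply isd_plus; [|apply H2_der; auto].
  apply isd_plus; [|apply H1_der; auto].
  apply isd_plus; [apply isd_const|apply isd_lin].
Qed.

Lemma F1_der x : lo < x < hi -> is_derive F1 x (F2 x).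
Proof.
  intros Hx. unfold F1, F2.
  apply isd_eq with (0 + T1 x + T2 x + P * B1 x + Q * B2 x).
  2: ring.
  apply isd_plus; [|apply is_derive_scal; apply SB_der].
  apply isd_plus; [|apply is_derive_scal; apply SB_der].
  apply isd_plus; [|apply G2_der; auto].
  apply isd_plus; [apply isd_const|apply G1_der; auto].
Qed.

Lemma F01_der x : is_derive F0 x (F01 x).
Proof.
  unfold F0, F01.
  apply isd_eq with (0 + D1 * 1 + P0 * S1 x + Q0 * S2 x).
  2: ring.
  apply isd_plus; [|apply is_derive_scal; apply SS_der].
  apply isd_plus; [|apply is_derive_scal; apply SS_der].
  apply isd_plus; [apply isd_const|apply isd_lin].
Qed.

Lemma F_smo : smo lo hi F.
Proof.
  unfold F.
  apply smo_plus; [|apply smo_scal; apply gsm_smo; apply SS_gsm].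
  apply smo_plus; [|apply smo_scal; apply gsm_smo; apply SS_gsm].
  apply smo_plus; [|apply H2_smo].
  apply smo_plus; [|apply H1_smo].
  apply smo_plus; [apply smo_const|].
  apply smo_of_deriv with (fun _ => D1 * 1). intros x _. apply isd_lin. apply smo_const.
Qed.


Lemma isd_sub (f g : R -> R) (x df dg : R) : is_derive f x df -> is_derive g x dg ->
  is_derive (fun t => f t - g t) x (df - dg).
Proof.
  intros H1 H2. apply (isd_ext (fun t => f t + (-1) * g t)). intros; ring.
  apply isd_eq with (df + (-1) * dg). apply isd_plus; auto. apply is_derive_scal; auto. ring.
Qed.

Lemma f1_isd s : b1 - e < s < b1 + e -> is_derive f1 s (Derive f1 s).
Proof. intros; apply (smo_isd (b1 - e) (b1 + e)); auto. Qed.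
Lemma f1_isd2 s : b1 - e < s < b1 + e -> is_derive (Derive f1) s (Derive_n f1 2 s).
Proof. intros; apply (smo_isd2 (b1 - e) (b1 + e)); auto. Qed.
Lemma f2_isd s : a2 - e < s < a2 + e -> is_derive f2 s (Derive f2 s).
Proof. intros; apply (smo_isd (a2 - e) (a2 + e)); auto. Qed.
Lemma f2_isd2 s : a2 - e < s < a2 + e -> is_derive (Derive f2) s (Derive_n f2 2 s).
Proof. intros; apply (smo_isd2 (a2 - e) (a2 + e)); auto. Qed.

Lemma geom1 : b1 + dl <= p1. Proof. unfold p1; lra. Qed.
Lemma geom2 : p2 + w <= a2 - dl. Proof. unfold p2; lra. Qed.
Lemma geom3 : p1 + w <= p2. Proof. unfold p1, p2; lra. Qed.

Lemma T1_low s : s <= b1 -> T1 s = Derive_n f1 2 s.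
Proof. intros H. unfold T1. rewrite phi1_low by auto. ring. Qed.
Lemma T1_high s : b1 + dl <= s -> T1 s = 0.
Proof. intros H. unfold T1. rewrite phi1_high by auto. ring. Qed.
Lemma T2_low s : s <= a2 - dl -> T2 s = 0.
Proof. intros H. unfold T2. rewrite phi2_low by auto. ring. Qed.
Lemma T2_high s : a2 <= s -> T2 s = Derive_n f2 2 s.
Proof. intros H. unfold T2. rewrite phi2_high by auto. ring. Qed.

Lemma G2_zero t : lo < t <= a2 - dl -> G2 t = 0.
Proof.
  intros Ht. destruct (Rle_dec t b1) as [H|H].
  - rewrite <- G2_b1. symmetry. apply (dzero G2 T2 t b1 H).
    intros y Hy; apply G2_der; unfold lo, hi in *; lra.
    intros y Hy; apply T2_low; lra.
  - rewrite <- G2_b1. apply (dzero G2 T2 b1 t ltac:(lra)).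
    intros y Hy; apply G2_der; unfold lo, hi in *; lra.
    intros y Hy; apply T2_low; lra.
Qed.

Lemma H2_zero t : lo < t <= a2 - dl -> H2 t = 0.
Proof.
  intros Ht. destruct (Rle_dec t b1) as [H|H].
  - rewrite <- H2_b1. symmetry. apply (dzero H2 G2 t b1 H).
    intros y Hy; apply H2_der; unfold lo, hi in *; lra.
    intros y Hy; apply G2_zero; unfold lo in *; lra.
  - rewrite <- H2_b1. apply (dzero H2 G2 b1 t ltac:(lra)).
    intros y Hy; apply H2_der; unfold lo, hi in *; lra.
    intros y Hy; apply G2_zero; unfold lo in *; lra.
Qed.

Lemma S1_low t : t <= p1 -> S1 t = 0. Proof. intros; apply SB_low; auto. apply Hbp1. Qed.
Lemma S2_low t : t <= p2 -> S2 t = 0. Proof. intros; apply SB_low; auto. apply Hbp2. Qed.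
Lemma Z1_low t : t <= p1 -> Z1 t = 0. Proof. intros; apply SS_low; auto. apply Hbp1. Qed.
Lemma Z2_low t : t <= p2 -> Z2 t = 0. Proof. intros; apply SS_low; auto. apply Hbp2. Qed.
Lemma B1_out t : (t <= p1 \/ p1 + w <= t) -> B1 t = 0. Proof. intros; apply Bf_out; auto. Qed.
Lemma B2_out t : (t <= p2 \/ p2 + w <= t) -> B2 t = 0. Proof. intros; apply Bf_out; auto. Qed.
Lemma S1_bnd t : 0 <= S1 t <= W1. Proof. apply SB_bnd; auto. apply Hbp1. Qed.
Lemma S2_bnd t : 0 <= S2 t <= W2. Proof. apply SB_bnd; auto. apply Hbp2. Qed.
Lemma S1_high t : p1 + w <= t -> S1 t = W1. Proof. intros; apply SB_high; auto. Qed.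
Lemma S2_high t : p2 + w <= t -> S2 t = W2. Proof. intros; apply SB_high; auto. Qed.

Lemma F_f1 t : lo < t <= b1 -> F t = f1 t.
Proof.
  intros Ht.
  assert (HG: G1 t = Derive f1 t - D1).
  { assert (E: (fun s => G1 s - Derive f1 s) b1 = (fun s => G1 s - Derive f1 s) t).
    { apply (dzero (fun s => G1 s - Derive f1 s) (fun s => T1 s - Derive_n f1 2 s) t b1 (proj2 Ht)).
      - intros y Hy. apply isd_sub. apply G1_der; unfold lo, hi in *; lra.
        apply f1_isd2; unfold lo in *; lra.
      - intros y Hy. rewrite T1_low by lra. ring. }
    simpl in E. rewrite G1_b1 in E. fold D1 in E. lra. }
  assert (HH: H1 t = f1 t - f1 b1 - D1 * (t - b1)).
  { assert (E: (fun s => H1 s - f1 s + D1 * s) b1 = (fun s => H1 s - f1 s + D1 * s) t).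
    { apply (dzero (fun s => H1 s - f1 s + D1 * s) (fun s => G1 s - Derive f1 s + D1 * 1) t b1 (proj2 Ht)).
      - intros y Hy. apply isd_plus. apply isd_sub. apply H1_der; unfold lo, hi in *; lra.
        apply f1_isd; unfold lo in *; lra. apply is_derive_scal, isd_id.
      - intros y Hy.
        assert (E2: (fun s => G1 s - Derive f1 s) b1 = (fun s => G1 s - Derive f1 s) y).
        { apply (dzero (fun s => G1 s - Derive f1 s) (fun s => T1 s - Derive_n f1 2 s) y b1 (proj2 Hy)).
          - intros z Hz. apply isd_sub. apply G1_der; unfold lo, hi in *; lra.
            apply f1_isd2; unfold lo in *; lra.
          - intros z Hz. rewrite T1_low by lra. ring. }
        simpl in E2. rewrite G1_b1 in E2. fold D1 in E2. lra. }
    simpl in E. rewrite H1_b1 in E. lra. }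
  unfold F. rewrite HH, H2_zero, Z1_low, Z2_low; unfold p1, p2, lo in *; try lra.
Qed.

Lemma S1_a2 : S1 a2 = W1. Proof. apply S1_high. unfold p1; lra. Qed.
Lemma S2_a2 : S2 a2 = W2. Proof. apply S2_high. unfold p2; lra. Qed.

Lemma X1_lb : W1 * (a2 - p1 - w) <= X1. Proof. apply SS_lb; auto. apply Hbp1. unfold p1; lra. Qed.
Lemma X2_ub : X2 <= W2 * (a2 - p2). Proof. apply SS_ub; auto. apply Hbp2. unfold p2; lra. Qed.
Lemma X1_bnd : 0 <= X1 <= W1 * L. Proof. apply SS_bnd; auto. apply Hbp1. lra. Qed.
Lemma X2_bnd : 0 <= X2 <= W2 * L. Proof. apply SS_bnd; auto. apply Hbp2. lra. Qed.

Lemma det_neg : det <= - (2 * w * W1 * W2).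
Proof.
  unfold det. pose proof X1_lb. pose proof X2_ub. pose proof W1pos. pose proof W2pos.
  assert (W1 * X2 <= W1 * (W2 * (a2 - p2))) by (apply Rmult_le_compat_l; lra).
  assert (W2 * (W1 * (a2 - p1 - w)) <= W2 * X1) by (apply Rmult_le_compat_l; lra).
  unfold p1, p2 in *. nra.
Qed.

Lemma det_lt : det < 0.
Proof. pose proof det_neg. pose proof W1pos. pose proof W2pos. assert (0 < w * W1 * W2) by (apply Rmult_lt_0_compat; [apply Rmult_lt_0_compat|]; lra). lra. Qed.

Lemma PQ_eq1 : P * W1 + Q * W2 = sp.
Proof. unfold P, Q. pose proof det_lt. field_simplify; [|lra]. unfold det. field. unfold det in H; lra. Qed.
Lemma PQ_eq2 : P * X1 + Q * X2 = R2.
Proof. unfold P, Q. pose proof det_lt. unfold det in *. field. lra. Qed.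
Lemma PQ0_eq2 : P0 * X1 + Q0 * X2 = R20.
Proof. unfold P0, Q0. pose proof det_lt. unfold det in *. field. lra. Qed.

Lemma F1_a2 : F1 a2 = D2.
Proof. unfold F1. rewrite S1_a2, S2_a2. pose proof PQ_eq1. unfold sp, Iq in H. fold D2. lra. Qed.

Lemma F_a2 : F a2 = f2 a2.
Proof. unfold F. pose proof PQ_eq2. unfold X1, X2, R2 in H. unfold L in *. lra. Qed.

Lemma F0_a2 : F0 a2 = f2 a2.
Proof. unfold F0. pose proof PQ0_eq2. unfold X1, X2, R20 in H. fold D2. lra. Qed.

Lemma F0_b1 : F0 b1 = f1 b1.
Proof. unfold F0. rewrite Z1_low, Z2_low; unfold p1, p2; try lra. Qed.

Lemma F2_high s : a2 <= s -> F2 s = Derive_n f2 2 s.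
Proof.
  intros H. unfold F2. rewrite T1_high, T2_high, B1_out, B2_out; unfold p1, p2 in *; try lra.
Qed.

Lemma F_f2 t : a2 <= t < hi -> F t = f2 t.
Proof.
  intros Ht.
  assert (HU: forall y, a2 <= y < hi -> F1 y = Derive f2 y).
  { intros y Hy.
    assert (E: (fun s => F1 s - Derive f2 s) y = (fun s => F1 s - Derive f2 s) a2).
    { apply (dzero (fun s => F1 s - Derive f2 s) (fun s => F2 s - Derive_n f2 2 s) a2 y (proj1 Hy)).
      - intros z Hz. apply isd_sub. apply F1_der; unfold lo, hi in *; lra.
        apply f2_isd2; unfold hi in *; lra.
      - intros z Hz. rewrite F2_high by lra. ring. }
    simpl in E. rewrite F1_a2 in E. fold D2 in E. lra. }
  assert (E: (fun s => F s - f2 s) t = (fun s => F s - f2 s) a2).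
  { apply (dzero (fun s => F s - f2 s) (fun s => F1 s - Derive f2 s) a2 t (proj1 Ht)).
    - intros z Hz. apply isd_sub. apply F_der; unfold lo, hi in *; lra.
      apply f2_isd; unfold hi in *; lra.
    - intros z Hz. rewrite HU by lra. ring. }
  simpl in E. rewrite F_a2 in E. lra.
Qed.


Lemma M1_ge : Rabs C1 + ta <= M1. Proof. unfold M1; lra. Qed.
Lemma M2_ge : Rabs C2 + tb <= M2. Proof. unfold M2; lra. Qed.

Lemma T1_bnd s : b1 <= s <= a2 -> Rabs (T1 s) <= M1.
Proof.
  intros Hs. destruct (Rle_dec s (b1 + dl)) as [H|H].
  - unfold T1. rewrite Rabs_mult. pose proof (phi1_bnd s). rewrite (Rabs_right (phi1 s)) by lra.
    pose proof (Heta1 s ltac:(lra)). pose proof M1_ge.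
    assert (Rabs (Derive_n f1 2 s) <= M1).
    { pose proof (Rabs_triang_inv (Derive_n f1 2 s) C1). lra. }
    pose proof (Rabs_pos (Derive_n f1 2 s)). nra.
  - rewrite T1_high by lra. rewrite Rabs_R0. unfold M1. pose proof (Rabs_pos C1). lra.
Qed.

Lemma T2_bnd s : b1 <= s <= a2 -> Rabs (T2 s) <= M2.
Proof.
  intros Hs. destruct (Rle_dec (a2 - dl) s) as [H|H].
  - unfold T2. rewrite Rabs_mult. pose proof (phi2_bnd s). rewrite (Rabs_right (phi2 s)) by lra.
    pose proof (Heta2 s ltac:(lra)). pose proof M2_ge.
    assert (Rabs (Derive_n f2 2 s) <= M2).
    { pose proof (Rabs_triang_inv (Derive_n f2 2 s) C2). lra. }
    pose proof (Rabs_pos (Derive_n f2 2 s)). nra.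
  - rewrite T2_low by lra. rewrite Rabs_R0. unfold M2. pose proof (Rabs_pos C2). lra.
Qed.

Lemma in_lohi t : b1 <= t <= a2 -> lo < t < hi. Proof. unfold lo, hi; lra. Qed.

Lemma G1_bnd t : b1 <= t <= a2 -> Rabs (G1 t) <= dl * M1.
Proof.
  intros Ht.
  assert (Hb: forall u, b1 <= u <= b1 + dl -> u <= a2 -> Rabs (G1 u) <= dl * M1).
  { intros u Hu Hu2. pose proof (dbound G1 T1 b1 u (- M1) M1 (proj1 Hu)) as D.
    assert (D1': forall x, b1 <= x <= u -> is_derive G1 x (T1 x)) by (intros; apply G1_der, in_lohi; lra).
    assert (D2': forall x, b1 <= x <= u -> - M1 <= T1 x <= M1).
    { intros x Hx. pose proof (T1_bnd x ltac:(lra)). apply Rabs_le_between; auto. }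
    specialize (D D1' D2'). rewrite G1_b1 in D. apply Rabs_le. unfold M1 in *. pose proof (Rabs_pos C1). nra. }
  destruct (Rle_dec t (b1 + dl)) as [H|H].
  - apply Hb; lra.
  - assert (G1 t = G1 (b1 + dl)).
    { apply (dzero G1 T1 (b1 + dl) t ltac:(lra)). intros; apply G1_der, in_lohi; lra.
      intros; apply T1_high; lra. }
    rewrite H0. apply Hb; unfold p1 in *; lra.
Qed.

Lemma G2_bnd t : b1 <= t <= a2 -> Rabs (G2 t) <= dl * M2.
Proof.
  intros Ht. destruct (Rle_dec t (a2 - dl)) as [H|H].
  - rewrite G2_zero by (unfold lo; lra). rewrite Rabs_R0. unfold M2. pose proof (Rabs_pos C2). nra.
  - pose proof (dbound G2 T2 (a2 - dl) t (- M2) M2 ltac:(lra)) as D.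
    assert (D1': forall x, a2 - dl <= x <= t -> is_derive G2 x (T2 x)) by (intros; apply G2_der, in_lohi; unfold p2 in *; lra).
    assert (D2': forall x, a2 - dl <= x <= t -> - M2 <= T2 x <= M2).
    { intros x Hx. pose proof (T2_bnd x ltac:(unfold p2 in *; lra)). apply Rabs_le_between; auto. }
    specialize (D D1' D2'). rewrite (G2_zero (a2 - dl)) in D by (unfold lo, p1, p2 in *; lra).
    apply Rabs_le. unfold M2 in *. pose proof (Rabs_pos C2). nra.
Qed.

Lemma H1_bnd t : b1 <= t <= a2 -> Rabs (H1 t) <= L * (dl * M1).
Proof.
  intros Ht. pose proof (dbound H1 G1 b1 t (- (dl * M1)) (dl * M1) (proj1 Ht)) as D.
  assert (D1': forall x, b1 <= x <= t -> is_derive H1 x (G1 x)) by (intros; apply H1_der, in_lohi; lra).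
  assert (D2': forall x, b1 <= x <= t -> - (dl * M1) <= G1 x <= dl * M1).
  { intros x Hx. apply Rabs_le_between. apply G1_bnd; lra. }
  specialize (D D1' D2'). rewrite H1_b1 in D. apply Rabs_le.
  assert (0 <= dl * M1) by (unfold M1; pose proof (Rabs_pos C1); nra). unfold L. nra.
Qed.

Lemma H2_bnd t : b1 <= t <= a2 -> Rabs (H2 t) <= L * (dl * M2).
Proof.
  intros Ht. pose proof (dbound H2 G2 b1 t (- (dl * M2)) (dl * M2) (proj1 Ht)) as D.
  assert (D1': forall x, b1 <= x <= t -> is_derive H2 x (G2 x)) by (intros; apply H2_der, in_lohi; lra).
  assert (D2': forall x, b1 <= x <= t -> - (dl * M2) <= G2 x <= dl * M2).
  { intros x Hx. apply Rabs_le_between. apply G2_bnd; lra. }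
  specialize (D D1' D2'). rewrite H2_b1 in D. apply Rabs_le.
  assert (0 <= dl * M2) by (unfold M2; pose proof (Rabs_pos C2); nra). unfold L. nra.
Qed.

Lemma abs_div_le (a d K d0 : R) : 0 < d0 -> d0 <= Rabs d -> Rabs (a * d) <= K -> Rabs a <= K / d0.
Proof.
  intros Hd0 Hd H. rewrite Rabs_mult in H. apply le_divr; auto.
  pose proof (Rabs_pos a). nra.
Qed.

Lemma Mpos : 0 < M1 /\ 0 < M2.
Proof. unfold M1, M2. pose proof (Rabs_pos C1). pose proof (Rabs_pos C2). lra. Qed.

Lemma PmP0 : Rabs (P - P0) <= dl * ((M1 + M2) * L / (w * W1)).
Proof.
  pose proof det_lt as Hdet. pose proof det_neg. pose proof W1pos. pose proof W2pos. pose proof Mpos.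
  assert (E: (P - P0) * det = - (Iq * X2 + W2 * (R2 - R20))).
  { unfold P, P0, sp, s0. field. lra. }
  assert (HI: Rabs Iq <= dl * (M1 + M2)).
  { unfold Iq. pose proof (G1_bnd a2 ltac:(lra)). pose proof (G2_bnd a2 ltac:(lra)).
    pose proof (Rabs_triang (G1 a2) (G2 a2)). lra. }
  assert (HR: Rabs (R2 - R20) <= L * (dl * (M1 + M2))).
  { unfold R2, R20. rewrite <- Hcc. fold L.
    replace (f2 a2 - f1 b1 - D1 * L - H1 a2 - H2 a2 - (f2 a2 - f1 b1 - D1 * L)) with (- (H1 a2 + H2 a2)) by ring.
    rewrite Rabs_Ropp. pose proof (H1_bnd a2 ltac:(lra)). pose proof (H2_bnd a2 ltac:(lra)).
    pose proof (Rabs_triang (H1 a2) (H2 a2)). lra. }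
  pose proof X2_bnd.
  assert (HA: Rabs ((P - P0) * det) <= 2 * dl * (M1 + M2) * W2 * L).
  { rewrite E, Rabs_Ropp. eapply Rle_trans. apply Rabs_triang. rewrite !Rabs_mult.
    rewrite (Rabs_right X2) by lra. rewrite (Rabs_right W2) by lra.
    pose proof (Rabs_pos Iq). pose proof (Rabs_pos (R2 - R20)).
    assert (Rabs Iq * X2 <= dl * (M1 + M2) * (W2 * L)) by (apply Rmult_le_compat; lra).
    assert (W2 * Rabs (R2 - R20) <= W2 * (L * (dl * (M1 + M2)))) by (apply Rmult_le_compat_l; lra).
    nra. }
  assert (Hd0: 0 < 2 * w * W1 * W2) by (repeat apply Rmult_lt_0_compat; lra).
  pose proof (abs_div_le (P - P0) det _ _ Hd0 ltac:(rewrite Rabs_left; lra) HA) as HB.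
  eapply Rle_trans. exact HB. right. field. lra.
Qed.

Lemma QmQ0 : Rabs (Q - Q0) <= dl * ((M1 + M2) * L / (w * W2)).
Proof.
  pose proof det_lt as Hdet. pose proof det_neg. pose proof W1pos. pose proof W2pos. pose proof Mpos.
  assert (E: (Q - Q0) * det = W1 * (R2 - R20) + Iq * X1).
  { unfold Q, Q0, sp, s0. field. lra. }
  assert (HI: Rabs Iq <= dl * (M1 + M2)).
  { unfold Iq. pose proof (G1_bnd a2 ltac:(lra)). pose proof (G2_bnd a2 ltac:(lra)).
    pose proof (Rabs_triang (G1 a2) (G2 a2)). lra. }
  assert (HR: Rabs (R2 - R20) <= L * (dl * (M1 + M2))).
  { unfold R2, R20. rewrite <- Hcc. fold L.
    replace (f2 a2 - f1 b1 - D1 * L - H1 a2 - H2 a2 - (f2 a2 - f1 b1 - D1 * L)) with (- (H1 a2 + H2 a2)) by ring.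
    rewrite Rabs_Ropp. pose proof (H1_bnd a2 ltac:(lra)). pose proof (H2_bnd a2 ltac:(lra)).
    pose proof (Rabs_triang (H1 a2) (H2 a2)). lra. }
  pose proof X1_bnd.
  assert (HA: Rabs ((Q - Q0) * det) <= 2 * dl * (M1 + M2) * W1 * L).
  { rewrite E. eapply Rle_trans. apply Rabs_triang. rewrite !Rabs_mult.
    rewrite (Rabs_right X1) by lra. rewrite (Rabs_right W1) by lra.
    pose proof (Rabs_pos Iq). pose proof (Rabs_pos (R2 - R20)).
    assert (Rabs Iq * X1 <= dl * (M1 + M2) * (W1 * L)) by (apply Rmult_le_compat; lra).
    assert (W1 * Rabs (R2 - R20) <= W1 * (L * (dl * (M1 + M2)))) by (apply Rmult_le_compat_l; lra).
    nra. }
  assert (Hd0: 0 < 2 * w * W1 * W2) by (repeat apply Rmult_lt_0_compat; lra).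
  pose proof (abs_div_le (Q - Q0) det _ _ Hd0 ltac:(rewrite Rabs_left; lra) HA) as HB.
  eapply Rle_trans. exact HB. right. field. lra.
Qed.

Definition pi := Rabs (P - P0) + Rabs (Q - Q0).

Lemma pi_bnd : pi <= dl * Kp.
Proof.
  unfold pi. pose proof PmP0. pose proof QmQ0. pose proof W1pos. pose proof W2pos.
  replace (dl * Kp) with (dl * ((M1 + M2) * L / (w * W1)) + dl * ((M1 + M2) * L / (w * W2))).
  lra. unfold Kp. field. lra.
Qed.

Lemma P0_nonpos : P0 <= 0.
Proof.
  pose proof det_lt. pose proof X2_ub. pose proof W2pos.
  assert (E: P0 * det = (D2 - D1) * (X2 - W2 * (a2 - c))) by (unfold P0, s0, R20; field; lra).
  assert (X2 - W2 * (a2 - c) <= 0) by (unfold p2 in *; nra).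
  assert (0 <= P0 * det) by (rewrite E; fold D1 D2; nra).
  nra.
Qed.

Lemma Q0_nonpos : Q0 <= 0.
Proof.
  pose proof det_lt. pose proof X1_lb. pose proof W1pos.
  assert (E: Q0 * det = (D2 - D1) * (W1 * (a2 - c) - X1)) by (unfold Q0, s0, R20; field; lra).
  assert (W1 * (a2 - c) - X1 <= 0) by (unfold p1 in *; nra).
  assert (0 <= Q0 * det) by (rewrite E; fold D1 D2; nra).
  nra.
Qed.

Lemma P_le_pi : P <= pi.
Proof. unfold pi. pose proof P0_nonpos. pose proof (Rabs_pos (Q - Q0)). pose proof (Rle_abs (P - P0)). lra. Qed.
Lemma Q_le_pi : Q <= pi.
Proof. unfold pi. pose proof Q0_nonpos. pose proof (Rabs_pos (P - P0)). pose proof (Rle_abs (Q - Q0)). lra. Qed.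

Lemma pi_pos : 0 <= pi.
Proof. unfold pi. pose proof (Rabs_pos (P - P0)). pose proof (Rabs_pos (Q - Q0)). lra. Qed.

Lemma prod_ub (X S W pp : R) : X <= pp -> 0 <= pp -> 0 <= S <= W -> X * S <= pp * W.
Proof. intros. destruct (Rle_dec X 0); nra. Qed.

Lemma prod_lb (X S W pp : R) : X <= pp -> 0 <= pp -> 0 <= S <= W -> X * W - pp * W <= X * S.
Proof. intros. destruct (Rle_dec X 0); nra. Qed.

Definition tau' := dl * (2 * (M1 + M2) + Kp * (W1 + W2)).

Lemma Kp_pos : 0 <= Kp.
Proof.
  unfold Kp. pose proof W1pos. pose proof W2pos. pose proof Mpos.
  assert (0 < / W1) by (apply Rinv_0_lt_compat; lra). assert (0 < / W2) by (apply Rinv_0_lt_compat; lra).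
  assert (0 < L) by (unfold L; lra).
  apply Rmult_le_pos; [|lra]. unfold Rdiv. apply Rmult_le_pos. nra. left; apply Rinv_0_lt_compat; lra.
Qed.

Lemma F1_bnds t : b1 <= t <= a2 -> D2 - tau' <= F1 t <= D1 + tau'.
Proof.
  intros Ht. pose proof (G1_bnd t Ht) as HG1. pose proof (G2_bnd t Ht) as HG2.
  pose proof pi_bnd as Hpi. pose proof pi_pos as Hpi0.
  pose proof (S1_bnd t) as HS1. pose proof (S2_bnd t) as HS2. pose proof W1pos as HW1. pose proof W2pos as HW2.
  pose proof (prod_ub P (S1 t) W1 pi P_le_pi pi_pos HS1) as U1.
  pose proof (prod_ub Q (S2 t) W2 pi Q_le_pi pi_pos HS2) as U2.
  pose proof (prod_lb P (S1 t) W1 pi P_le_pi pi_pos HS1) as L1.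
  pose proof (prod_lb Q (S2 t) W2 pi Q_le_pi pi_pos HS2) as L2.
  pose proof PQ_eq1 as Hsp. unfold sp in Hsp.
  assert (HI: Rabs Iq <= dl * (M1 + M2)).
  { unfold Iq. pose proof (G1_bnd a2 ltac:(lra)). pose proof (G2_bnd a2 ltac:(lra)).
    pose proof (Rabs_triang (G1 a2) (G2 a2)). lra. }
  apply Rabs_le_between in HG1. apply Rabs_le_between in HG2. apply Rabs_le_between in HI.
  assert (HK: pi * (W1 + W2) <= dl * Kp * (W1 + W2)) by (apply Rmult_le_compat_r; lra).
  unfold tau', F1. nra.
Qed.

Lemma mm_lt : mm < 1.
Proof. unfold mm. apply Rmax_lub_lt; fold D1 D2; lra. Qed.

Lemma F1_abs t : b1 <= t <= a2 -> Rabs (F1 t) <= (1 + mm) / 2.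
Proof.
  intros Ht. pose proof (F1_bnds t Ht) as HA. pose proof Hd3 as HB. fold tau' in HB.
  pose proof (Rmax_l D1 (- D2)) as HC. pose proof (Rmax_r D1 (- D2)) as HD. fold mm in HC, HD.
  apply Rabs_le. lra.
Qed.

Lemma F1_abs1 t : b1 <= t <= a2 -> Rabs (F1 t) < 1.
Proof. intros Ht. pose proof (F1_abs t Ht). pose proof mm_lt. lra. Qed.

Lemma F_b1 : F b1 = f1 b1.
Proof. apply F_f1. unfold lo; lra. Qed.

Lemma F_ub t : b1 <= t <= a2 -> F t <= f1 b1 + L.
Proof.
  intros Ht. pose proof (dbound F F1 b1 t (-1) 1 (proj1 Ht)) as D.
  assert (D1': forall x, b1 <= x <= t -> is_derive F x (F1 x)) by (intros; apply F_der, in_lohi; lra).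
  assert (D2': forall x, b1 <= x <= t -> -1 <= F1 x <= 1).
  { intros x Hx. pose proof (F1_abs1 x ltac:(lra)). apply Rabs_le_between. lra. }
  specialize (D D1' D2'). rewrite F_b1 in D. unfold L. lra.
Qed.

Lemma F01_mono x y : x <= y -> F01 y <= F01 x.
Proof.
  intros H. unfold F01. pose proof (SB_mono b1 p1 w x y H) as HA. pose proof (SB_mono b1 p2 w x y H) as HB.
  fold S1 S2 in HA, HB. pose proof P0_nonpos. pose proof Q0_nonpos. nra.
Qed.

Lemma F0_lb t : b1 <= t <= a2 -> f1 b1 <= F0 t.
Proof.
  intros Ht. destruct (Rle_dec 0 (F01 t)) as [H|H].
  - pose proof (dbound F0 F01 b1 t (F01 t) (F01 b1) (proj1 Ht) (fun x _ => F01_der x)) as D.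
    assert (D2': forall x, b1 <= x <= t -> F01 t <= F01 x <= F01 b1).
    { intros x Hx. split; apply F01_mono; lra. }
    specialize (D D2'). rewrite F0_b1 in D. nra.
  - pose proof (dbound F0 F01 t a2 (F01 a2) (F01 t) (proj2 Ht) (fun x _ => F01_der x)) as D.
    assert (D2': forall x, t <= x <= a2 -> F01 a2 <= F01 x <= F01 t).
    { intros x Hx. split; apply F01_mono; lra. }
    specialize (D D2'). rewrite F0_a2 in D. nra.
Qed.

Lemma F_F0 t : b1 <= t <= a2 -> Rabs (F t - F0 t) <= dl * (L * (M1 + M2) + Kp * (W1 + W2) * L).
Proof.
  intros Ht.
  replace (F t - F0 t) with (H1 t + H2 t + ((P - P0) * Z1 t + (Q - Q0) * Z2 t)) by (unfold F, F0; ring).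
  pose proof (H1_bnd t Ht) as HH1. pose proof (H2_bnd t Ht) as HH2. pose proof pi_bnd as Hpi.
  pose proof W1pos as HW1. pose proof W2pos as HW2.
  assert (HZ1: 0 <= Z1 t <= W1 * L).
  { pose proof (SS_bnd b1 p1 w Hw Hbp1 t (proj1 Ht)) as HA. fold Z1 in HA. change (WW b1 p1 w) with W1 in HA. unfold L.
    split. lra. apply Rle_trans with (W1 * (t - b1)). lra. apply Rmult_le_compat_l; lra. }
  assert (HZ2: 0 <= Z2 t <= W2 * L).
  { pose proof (SS_bnd b1 p2 w Hw Hbp2 t (proj1 Ht)) as HA. fold Z2 in HA. change (WW b1 p2 w) with W2 in HA. unfold L.
    split. lra. apply Rle_trans with (W2 * (t - b1)). lra. apply Rmult_le_compat_l; lra. }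
  assert (HP: Rabs ((P - P0) * Z1 t) <= Rabs (P - P0) * (W1 * L)).
  { rewrite Rabs_mult, (Rabs_right (Z1 t)) by lra. apply Rmult_le_compat_l. apply Rabs_pos. lra. }
  assert (HQ: Rabs ((Q - Q0) * Z2 t) <= Rabs (Q - Q0) * (W2 * L)).
  { rewrite Rabs_mult, (Rabs_right (Z2 t)) by lra. apply Rmult_le_compat_l. apply Rabs_pos. lra. }
  assert (HPQ: Rabs (P - P0) * (W1 * L) + Rabs (Q - Q0) * (W2 * L) <= pi * ((W1 + W2) * L)).
  { unfold pi. pose proof (Rabs_pos (P - P0)). pose proof (Rabs_pos (Q - Q0)). assert (0 < L) by (unfold L; lra). nra. }
  assert (HK: pi * ((W1 + W2) * L) <= dl * Kp * ((W1 + W2) * L)).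
  { apply Rmult_le_compat_r; auto. assert (0 < L) by (unfold L; lra). nra. }
  pose proof (Rabs_triang (H1 t + H2 t) ((P - P0) * Z1 t + (Q - Q0) * Z2 t)).
  pose proof (Rabs_triang (H1 t) (H2 t)).
  pose proof (Rabs_triang ((P - P0) * Z1 t) ((Q - Q0) * Z2 t)).
  assert (E: dl * (L * (M1 + M2) + Kp * (W1 + W2) * L) = L * (dl * M1) + L * (dl * M2) + dl * Kp * ((W1 + W2) * L)) by ring.
  rewrite E. lra.
Qed.

Lemma F_pos t : b1 <= t <= a2 -> f1 b1 / 2 <= F t.
Proof.
  intros Ht. pose proof (F_F0 t Ht) as HA. pose proof (F0_lb t Ht) as HB. pose proof Hd5 as HC.
  apply Rabs_le_between in HA. lra.
Qed.

Lemma F2_mid t : b1 + dl <= t <= a2 - dl -> F2 t = P * B1 t + Q * B2 t.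
Proof. intros Ht. unfold F2. rewrite T1_high, T2_low by lra. ring. Qed.

Lemma F2_left t : b1 <= t <= b1 + dl -> F2 t = phi1 t * Derive_n f1 2 t.
Proof.
  intros Ht. pose proof geom1 as Hg1. pose proof geom2 as Hg2. pose proof geom3 as Hg3.
  unfold F2. rewrite T2_low, B1_out, B2_out by lra. unfold T1. ring.
Qed.

Lemma F2_right t : a2 - dl <= t <= a2 -> F2 t = phi2 t * Derive_n f2 2 t.
Proof.
  intros Ht. pose proof geom1 as Hg1. pose proof geom2 as Hg2. pose proof geom3 as Hg3.
  unfold F2. rewrite T1_high, B1_out, B2_out by lra. unfold T2. ring.
Qed.

Lemma psc_F t : b1 <= t <= a2 ->
  0 < F t /\ Rabs (F1 t) < 1 /\ 0 < N * (1 - F1 t ^ 2) - 2 * F t * F2 t /\ l0 < F1 t.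
Proof.
  intros Ht. pose proof (F_pos t Ht) as Hpos. pose proof (F1_abs1 t Ht) as Habs.
  pose proof (F1_bnds t Ht) as Hb. pose proof Hd3' as Hl. fold tau' in Hl.
  split. lra. split. exact Habs. split; [|lra].
  pose proof geom1 as Hg1. pose proof geom2 as Hg2. pose proof geom3 as Hg3.
  destruct (Rle_dec t (b1 + dl)) as [H|H].
  -
    rewrite F2_left by lra.
    assert (HF1: F1 t = D1 + G1 t).
    { unfold F1. rewrite G2_zero, S1_low, S2_low; unfold lo in *; try lra. }
    assert (HF: F t = f1 b1 + D1 * (t - b1) + H1 t).
    { unfold F. rewrite H2_zero, Z1_low, Z2_low; unfold lo in *; try lra. }
    destruct Hta as [_ Hm].
    apply (Hm (F t) (F1 t) (Derive_n f1 2 t) (phi1 t)).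
    + rewrite HF. pose proof (H1_bnd t Ht) as HA. pose proof Hd1 as HB.
      pose proof (Rabs_pos D1). pose proof Mpos.
      assert (Rabs (D1 * (t - b1)) <= Rabs D1 * dl).
      { rewrite Rabs_mult, (Rabs_right (t - b1)) by lra. apply Rmult_le_compat_l; lra. }
      replace (f1 b1 + D1 * (t - b1) + H1 t - f1 b1) with (D1 * (t - b1) + H1 t) by ring.
      assert (dl * (Rabs D1 + L * M1) = Rabs D1 * dl + L * (dl * M1)) by ring.
      eapply Rle_trans. apply Rabs_triang. lra.
    + rewrite HF1. pose proof (G1_bnd t Ht) as HA. pose proof Hd1. apply Rabs_le_between in HA. apply Rabs_le. lra.
    + pose proof (Heta1 t ltac:(lra)) as HA. apply Rabs_le_between in HA. lra.
    + apply phi1_bnd.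
  - destruct (Rle_dec (a2 - dl) t) as [H'|H'].
    + rewrite F2_right by lra.
      destruct Htb as [_ Hm].
      apply (Hm (F t) (F1 t) (Derive_n f2 2 t) (phi2 t)).
      * pose proof (dbound F F1 t a2 (-1) 1 (proj2 Ht)) as D.
        assert (DA: forall x, t <= x <= a2 -> is_derive F x (F1 x)) by (intros; apply F_der, in_lohi; lra).
        assert (DB: forall x, t <= x <= a2 -> -1 <= F1 x <= 1).
        { intros x Hx. pose proof (F1_abs1 x ltac:(lra)). apply Rabs_le_between. lra. }
        specialize (D DA DB). rewrite F_a2 in D. pose proof Hd2. apply Rabs_le. lra.
      * pose proof (dbound F1 F2 t a2 (- M2) M2 (proj2 Ht)) as D.
        assert (DA: forall x, t <= x <= a2 -> is_derive F1 x (F2 x)) by (intros; apply F1_der, in_lohi; lra).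
        assert (DB: forall x, t <= x <= a2 -> - M2 <= F2 x <= M2).
        { intros x Hx. unfold F2. rewrite T1_high, B1_out, B2_out by lra.
          pose proof (T2_bnd x ltac:(lra)) as HT. apply Rabs_le_between in HT. lra. }
        specialize (D DA DB). rewrite F1_a2 in D. pose proof Hd2. pose proof Mpos.
        assert (M2 * (a2 - t) <= dl * M2) by (rewrite Rmult_comm; apply Rmult_le_compat_r; lra).
        apply Rabs_le. lra.
      * pose proof (Heta2 t ltac:(lra)) as HA. apply Rabs_le_between in HA. lra.
      * apply phi2_bnd.
    + rewrite F2_mid by lra.
      pose proof (Bf_bnd p1 w t) as HB1. pose proof (Bf_bnd p2 w t) as HB2. fold B1 B2 in HB1, HB2.
      pose proof P_le_pi. pose proof Q_le_pi. pose proof P0_nonpos. pose proof Q0_nonpos.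
      assert (HPB: P * B1 t <= Rabs (P - P0)).
      { apply mul01; auto. pose proof (Rle_abs (P - P0)). lra. apply Rabs_pos. }
      assert (HQB: Q * B2 t <= Rabs (Q - Q0)).
      { apply mul01; auto. pose proof (Rle_abs (Q - Q0)). lra. apply Rabs_pos. }
      pose proof pi_bnd as Hpi. unfold pi in Hpi.
      assert (Hu: P * B1 t + Q * B2 t <= dl * Kp) by lra.
      set (u := P * B1 t + Q * B2 t) in *.
      pose proof (F_ub t Ht) as Hub. pose proof (F1_abs t Ht) as HA.
      assert (HF1sq: F1 t ^ 2 <= ((1 + mm) / 2) ^ 2).
      { pose proof (Rabs_pos (F1 t)). rewrite <- (pow2_abs (F1 t)). apply pow_incr. lra. }
      pose proof Hd4 as HD4. pose proof Kp_pos as HKp.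
      assert (HuF: F t * u <= (f1 b1 + L) * (dl * Kp)).
      { apply mulub; auto. split; lra. apply Rmult_le_pos; lra. }
      assert (HNs: N * (1 - ((1 + mm) / 2) ^ 2) <= N * (1 - F1 t ^ 2)) by (apply Rmult_le_compat_l; lra).
      assert (E: dl * Kp * (2 * (f1 b1 + L)) = 2 * ((f1 b1 + L) * (dl * Kp))) by ring.
      lra.
Qed.


Lemma core_all : exists F F1 F2 : R -> R,
  smo (b1 - e) (a2 + e) F /\
  (forall x, b1 - e < x < a2 + e -> is_derive F x (F1 x) /\ is_derive F1 x (F2 x)) /\
  (forall t, b1 - e < t <= b1 -> F t = f1 t) /\
  (forall t, a2 <= t < a2 + e -> F t = f2 t) /\
  (forall t, b1 <= t <= a2 -> 0 < F t /\ Rabs (F1 t) < 1 /\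
     0 < (INR n - 1) * (1 - F1 t ^ 2) - 2 * F t * F2 t /\ l0 < F1 t).
Proof using All.
  exists F, F1, F2. split; [apply F_smo|]. split.
  { intros x Hx. split; [apply F_der|apply F1_der]; exact Hx. }
  split. { intros t Ht. apply F_f1. exact Ht. }
  split. { intros t Ht. apply F_f2. exact Ht. }
  intros t Ht. apply psc_F. exact Ht.
Qed.

End Core.



Lemma margin (N A d c : R) : 0 < N -> 0 < A -> Rabs d < 1 -> 0 < N * (1 - d^2) - 2 * A * c ->
  exists ta, 0 < ta <= 1 /\ forall x y z phi, Rabs (x - A) <= ta -> Rabs (y - d) <= ta ->
    z <= c + ta -> 0 <= phi <= 1 -> 0 < x /\ Rabs y < 1 /\ 0 < N * (1 - y^2) - 2 * x * (phi * z).
Proof.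
  intros HN HA Hd Hc.
  set (mc := Rmax c 0).
  assert (Hmc: c <= mc /\ 0 <= mc) by (split; [apply Rmax_l|apply Rmax_r]).
  assert (Hd2: d ^ 2 < 1).
  { rewrite <- (pow2_abs d). pose proof (Rabs_pos d). nra. }
  assert (Hh0: 0 < N * (1 - d^2) - 2 * A * mc).
  { unfold mc. destruct (Rle_dec c 0). rewrite Rmax_right by lra. nra. rewrite Rmax_left by lra. lra. }
  set (h0 := N * (1 - d^2) - 2 * A * mc) in *.
  set (K := 3 * N + 2 * (A + mc + 1)).
  assert (HK: 0 < K) by (unfold K; lra).
  set (ta := Rmin 1 (Rmin (A/2) (Rmin ((1 - Rabs d)/2) (h0 / (2 * K))))).
  assert (Hta1: ta <= 1) by apply Rmin_l.
  assert (Hta2: ta <= A/2) by (eapply Rle_trans; [apply Rmin_r|apply Rmin_l]).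
  assert (Hta3: ta <= (1 - Rabs d)/2) by (eapply Rle_trans; [apply Rmin_r|]; eapply Rle_trans; [apply Rmin_r|apply Rmin_l]).
  assert (Hta4: ta <= h0 / (2 * K)) by (eapply Rle_trans; [apply Rmin_r|]; eapply Rle_trans; [apply Rmin_r|apply Rmin_r]).
  assert (Hta0: 0 < ta).
  { unfold ta. apply Rmin_glb_lt. lra. apply Rmin_glb_lt. lra. apply Rmin_glb_lt. lra.
    apply Rdiv_lt_0_compat; lra. }
  exists ta. split. lra.
  intros x y z phi Hx Hy Hz Hphi.
  apply Rabs_le_between in Hx.
  assert (Hx0: 0 < x) by lra.
  assert (Hya: Rabs y <= Rabs d + ta).
  { pose proof (Rabs_triang (y - d) d). replace (y - d + d) with y in H by ring. lra. }
  split. lra. split. lra.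
  assert (Hy2: y ^ 2 <= d ^ 2 + 3 * ta).
  { rewrite <- (pow2_abs y). rewrite <- (pow2_abs d). pose proof (Rabs_pos y). pose proof (Rabs_pos d).
    assert (Rabs y ^ 2 <= (Rabs d + ta) ^ 2) by (apply pow_incr; lra). nra. }
  assert (Hpz: phi * z <= mc + ta).
  { destruct (Rle_dec z 0). assert (phi * z <= 0) by nra. lra.
    assert (phi * z <= z) by nra. lra. }
  assert (H1: N * (1 - y ^ 2) >= N * (1 - d^2) - 3 * N * ta) by nra.
  assert (H2: 2 * x * (phi * z) <= 2 * (A + ta) * (mc + ta)).
  { destruct (Rle_dec (phi * z) 0). assert (0 <= 2 * (A + ta) * (mc + ta)) by nra. nra.
    apply Rmult_le_compat; lra. }
  assert (H3: ta * K <= h0 / 2).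
  { apply Rmult_le_compat_r with (r := K) in Hta4; [|lra].
    replace (h0 / (2 * K) * K) with (h0 / 2) in Hta4 by (field; lra). lra. }
  unfold K in H3. unfold h0 in *. nra.
Qed.

Lemma cont_eps (g : R -> R) x eps : continuous g x -> 0 < eps ->
  exists d, 0 < d /\ forall y, Rabs (y - x) < d -> Rabs (g y - g x) < eps.
Proof.
  intros Hc He. apply filterlim_locally with (eps := mkposreal eps He) in Hc.
  destruct Hc as [d Hd]. exists d. split. apply cond_pos.
  intros y Hy. apply (Hd y Hy).
Qed.

Lemma ws_eq n f t : f t <> 0 -> warped_scal n f t =
  INR n / (f t) ^ 2 * ((INR n - 1) * (1 - (Derive f t) ^ 2) - 2 * f t * Derive_n f 2 t).
Proof. intros H. unfold warped_scal. field. auto. Qed.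

Lemma ws_pos_iff n f t : (1 <= n)%nat -> 0 < f t ->
  (0 < warped_scal n f t <-> 0 < (INR n - 1) * (1 - (Derive f t) ^ 2) - 2 * f t * Derive_n f 2 t).
Proof.
  intros Hn Hf. rewrite ws_eq by lra.
  assert (Hn': 0 < INR n) by (apply lt_0_INR; lia).
  assert (0 < INR n / f t ^ 2) by (apply Rdiv_lt_0_compat; auto; apply pow_lt; auto).
  split; intros H0.
  - apply Rmult_lt_reg_l with (INR n / f t ^ 2); auto. lra.
  - apply Rmult_lt_0_compat; auto.
Qed.

Lemma ws_loc n (f g : R -> R) t : locally t (fun s => f s = g s) -> warped_scal n f t = warped_scal n g t.
Proof.
  intros H. unfold warped_scal.
  rewrite (locally_singleton _ _ H), (Derive_ext_loc f g t H), (Derive_n_ext_loc f g 2 t H). reflexivity.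
Qed.

Lemma Kle (dl K Kall beta : R) : 0 <= K <= Kall -> 0 < Kall -> 0 <= dl <= beta / Kall -> dl * K <= beta.
Proof.
  intros HK HKa Hd. apply Rle_trans with (dl * Kall). apply Rmult_le_compat_l; lra.
  destruct Hd as [_ Hd].
  apply Rmult_le_compat_r with (r := Kall) in Hd; [|lra].
  replace (beta / Kall * Kall) with beta in Hd by (field; lra). lra.
Qed.

Lemma build (n : nat) (a1 b1 a2 b2 : R) (f1 f2 : R -> R) (l0 : R) :
  (2 <= n)%nat ->
  a1 < b1 -> a2 < b2 ->
  smooth_on a1 b1 f1 -> positive_on a1 b1 f1 ->
  smooth_on a2 b2 f2 -> positive_on a2 b2 f2 ->
  psc_on n a1 b1 f1 -> psc_on n a2 b2 f2 ->
  f1 b1 < f2 a2 ->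
  Derive f1 b1 < 1 -> 0 < Derive f1 b1 ->
  Derive f2 a2 <= Derive f1 b1 -> -1 < Derive f2 a2 ->
  (Derive f1 b1 = Derive f2 a2 ->
     (a2 - b1) * Derive f1 b1 = f2 a2 - f1 b1) ->
  (Derive f2 a2 < Derive f1 b1 ->
     (a2 - b1) * Derive f1 b1 > f2 a2 - f1 b1 /\
     f2 a2 - f1 b1 > (a2 - b1) * Derive f2 a2) ->
  l0 < Derive f2 a2 ->
  exists f : R -> R,
     smooth_on a1 b2 f /\ positive_on a1 b2 f /\
     (forall t, a1 <= t <= (a1 + b1) / 2 -> f t = f1 t) /\
     (forall t, (a2 + b2) / 2 <= t <= b2 -> f t = f2 t) /\
     psc_on n a1 b2 f /\
     (forall t, t < b1 -> Derive f t = Derive f1 t) /\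
     (forall t, b1 <= t <= a2 -> l0 < Derive f t) /\
     (forall t, a2 < t -> Derive f t = Derive f2 t).
Proof.
  intros Hn Hab1 Hab2 [eps1 [Heps1 Hs1]] Hpos1 [eps2 [Heps2 Hs2]] Hpos2 Hpsc1 Hpsc2 Hf HD1a HD1b HD12 HD2
    Htr1 Htr2 Hl0.
  set (D1 := Derive f1 b1) in *. set (D2 := Derive f2 a2) in *.
  set (C1 := Derive_n f1 2 b1). set (C2 := Derive_n f2 2 a2).
  assert (Hp1: 0 < f1 b1) by (apply Hpos1; lra).
  assert (Hp2: 0 < f2 a2) by (apply Hpos2; lra).
  assert (HL: b1 < a2).
  { destruct (Req_dec D1 D2) as [E|E].
    - specialize (Htr1 E). nra.
    - destruct (Htr2 ltac:(lra)) as [H1 H2]. nra. }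
  assert (Hcex: exists c, b1 < c < a2 /\ (f2 a2 - f1 b1) - D1 * (a2 - b1) = (D2 - D1) * (a2 - c)).
  { destruct (Req_dec D1 D2) as [E|E].
    - exists ((b1 + a2) / 2). split. lra. specialize (Htr1 E). rewrite E in *. lra.
    - destruct (Htr2 ltac:(lra)) as [H1 H2].
      set (num := (f2 a2 - f1 b1) - D1 * (a2 - b1)).
      exists (a2 - num / (D2 - D1)). split; [split|].
      + assert (num / (D2 - D1) < a2 - b1).
        { apply Rmult_lt_reg_r with (D1 - D2). lra.
          replace (num / (D2 - D1) * (D1 - D2)) with (- num) by (field; lra). unfold num. nra. }
        lra.
      + assert (0 < num / (D2 - D1)).
        { replace (num / (D2 - D1)) with ((- num) / (D1 - D2)) by (field; lra).
          apply Rdiv_lt_0_compat; unfold num; lra. }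
        lra.
      + field. lra. }
  destruct Hcex as [c [Hc Hcc]].
  set (e := Rmin (Rmin eps1 eps2) (Rmin (b1 - a1) (b2 - a2)) / 2).
  assert (He: 0 < e).
  { unfold e. apply Rdiv_lt_0_compat; [|lra]. apply Rmin_glb_lt; apply Rmin_glb_lt; lra. }
  assert (He1: e < eps1 /\ e < eps2 /\ e < b1 - a1 /\ e < b2 - a2).
  { unfold e. pose proof (Rmin_l (Rmin eps1 eps2) (Rmin (b1 - a1) (b2 - a2))).
    pose proof (Rmin_r (Rmin eps1 eps2) (Rmin (b1 - a1) (b2 - a2))).
    pose proof (Rmin_l eps1 eps2). pose proof (Rmin_r eps1 eps2).
    pose proof (Rmin_l (b1 - a1) (b2 - a2)). pose proof (Rmin_r (b1 - a1) (b2 - a2)). lra. }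
  assert (Hs1': smo (b1 - e) (b1 + e) f1) by (intros k x Hx; apply Hs1; lra).
  assert (Hs2': smo (a2 - e) (a2 + e) f2) by (intros k x Hx; apply Hs2; lra).
  assert (HN: 1 <= INR n - 1).
  { apply le_INR in Hn. simpl in Hn. lra. }
  assert (Hn1: (1 <= n)%nat) by lia.
  assert (Hps1: 0 < (INR n - 1) * (1 - D1 ^ 2) - 2 * f1 b1 * C1).
  { apply (ws_pos_iff n f1 b1 Hn1 Hp1). apply Hpsc1. lra. }
  assert (Hps2: 0 < (INR n - 1) * (1 - D2 ^ 2) - 2 * f2 a2 * C2).
  { apply (ws_pos_iff n f2 a2 Hn1 Hp2). apply Hpsc2. lra. }
  destruct (margin (INR n - 1) (f1 b1) D1 C1 ltac:(lra) Hp1 ltac:(apply Rabs_lt_between; lra) Hps1)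
    as [ta [Hta0 Hta]].
  destruct (margin (INR n - 1) (f2 a2) D2 C2 ltac:(lra) Hp2 ltac:(apply Rabs_lt_between; lra) Hps2)
    as [tb [Htb0 Htb]].
  destruct (cont_eps (Derive_n f1 2) b1 ta) as [eta1 [Heta1 Hc1]].
  { apply (smo_cont (b1 - e) (b1 + e)). apply smo_D2; auto. lra. }
  { lra. }
  destruct (cont_eps (Derive_n f2 2) a2 tb) as [eta2 [Heta2 Hc2]].
  { apply (smo_cont (a2 - e) (a2 + e)). apply smo_D2; auto. lra. }
  { lra. }
  set (w := Rmin (c - b1) (a2 - c) / 4).
  assert (Hw: 0 < w) by (unfold w; apply Rdiv_lt_0_compat; [apply Rmin_glb_lt|]; lra).
  assert (Hw1: b1 + w <= c - 2 * w).
  { unfold w. pose proof (Rmin_l (c - b1) (a2 - c)). pose proof (Rmin_r (c - b1) (a2 - c)).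
    pose proof (Rmin_glb_lt (c - b1) (a2 - c) 0). lra. }
  assert (Hw2: c + 2 * w <= a2 - w).
  { unfold w. pose proof (Rmin_l (c - b1) (a2 - c)). pose proof (Rmin_r (c - b1) (a2 - c)). lra. }
  set (M1 := Rabs C1 + 1). set (M2 := Rabs C2 + 1).
  set (L := a2 - b1).
  set (W1 := WW b1 (c - 2 * w) w). set (W2 := WW b1 (c + w) w).
  assert (HW1: 0 < W1) by (apply WW_pos; lra).
  assert (HW2: 0 < W2) by (apply WW_pos; lra).
  set (Kp := (M1 + M2) * L / w * (/ W1 + / W2)).
  set (mm := Rmax D1 (- D2)).
  assert (HM: 0 < M1 /\ 0 < M2) by (unfold M1, M2; pose proof (Rabs_pos C1); pose proof (Rabs_pos C2); lra).
  assert (HKp: 0 <= Kp).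
  { unfold Kp. assert (0 < / W1) by (apply Rinv_0_lt_compat; lra). assert (0 < / W2) by (apply Rinv_0_lt_compat; lra).
    apply Rmult_le_pos; [|lra]. unfold Rdiv. apply Rmult_le_pos. unfold L; nra. left; apply Rinv_0_lt_compat; lra. }
  assert (Hmm: D1 <= mm /\ - D2 <= mm /\ mm < 1).
  { unfold mm. split. apply Rmax_l. split. apply Rmax_r. apply Rmax_lub_lt; lra. }
  set (g := (INR n - 1) * (1 - ((1 + mm) / 2) ^ 2)).
  assert (Hg: 0 < g).
  { unfold g. assert (((1 + mm) / 2) ^ 2 < 1). { assert (0 < (1 + mm)/2 < 1) by lra. nra. } nra. }
  set (K1 := Rabs D1 + L * M1).
  set (K3 := 2 * (M1 + M2) + Kp * (W1 + W2)).
  set (K4 := Kp * (2 * (f1 b1 + L))).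
  set (K5 := L * (M1 + M2) + Kp * (W1 + W2) * L).
  assert (HL0: 0 < L) by (unfold L; lra).
  assert (HK1: 0 <= K1) by (unfold K1; pose proof (Rabs_pos D1); nra).
  assert (HK3: 0 <= K3) by (unfold K3; nra).
  assert (HK4: 0 <= K4) by (unfold K4; nra).
  assert (HK5: 0 <= K5) by (unfold K5; apply Rplus_le_le_0_compat; [apply Rmult_le_pos; lra|]; apply Rmult_le_pos; [apply Rmult_le_pos; lra|lra]).
  set (Kall := 1 + M1 + M2 + 2 + K1 + K3 + K4 + K5).
  assert (HKall: 0 < Kall) by (unfold Kall; lra).
  set (beta := Rmin (Rmin ta tb) (Rmin (Rmin ((1 - mm) / 2) ((D2 - l0) / 2)) (Rmin (g / 2) (f1 b1 / 2)))).
  assert (Hbeta: beta <= ta /\ beta <= tb /\ beta <= (1 - mm) / 2 /\ beta <= (D2 - l0) / 2 /\ beta <= g / 2 /\ beta <= f1 b1 / 2).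
  { unfold beta.
    pose proof (Rmin_l (Rmin ta tb) (Rmin (Rmin ((1 - mm) / 2) ((D2 - l0) / 2)) (Rmin (g / 2) (f1 b1 / 2)))) as X1.
    pose proof (Rmin_r (Rmin ta tb) (Rmin (Rmin ((1 - mm) / 2) ((D2 - l0) / 2)) (Rmin (g / 2) (f1 b1 / 2)))) as X2.
    pose proof (Rmin_l ta tb). pose proof (Rmin_r ta tb).
    pose proof (Rmin_l (Rmin ((1 - mm) / 2) ((D2 - l0) / 2)) (Rmin (g / 2) (f1 b1 / 2))).
    pose proof (Rmin_r (Rmin ((1 - mm) / 2) ((D2 - l0) / 2)) (Rmin (g / 2) (f1 b1 / 2))).
    pose proof (Rmin_l ((1 - mm) / 2) ((D2 - l0) / 2)). pose proof (Rmin_r ((1 - mm) / 2) ((D2 - l0) / 2)).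
    pose proof (Rmin_l (g / 2) (f1 b1 / 2)). pose proof (Rmin_r (g / 2) (f1 b1 / 2)).
    lra. }
  assert (Hbeta0: 0 < beta).
  { unfold beta. repeat apply Rmin_glb_lt; lra. }
  set (dl := Rmin (Rmin w (e / 2)) (Rmin (eta1 / 2) (Rmin (eta2 / 2) (beta / Kall)))).
  assert (Hdl: 0 < dl /\ dl <= w /\ dl <= e / 2 /\ dl <= eta1 / 2 /\ dl <= eta2 / 2 /\ dl <= beta / Kall).
  { unfold dl. split.
    - repeat apply Rmin_glb_lt; try lra. apply Rdiv_lt_0_compat; lra.
    - pose proof (Rmin_l (Rmin w (e / 2)) (Rmin (eta1 / 2) (Rmin (eta2 / 2) (beta / Kall)))) as X1.
      pose proof (Rmin_r (Rmin w (e / 2)) (Rmin (eta1 / 2) (Rmin (eta2 / 2) (beta / Kall)))) as X2.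
      pose proof (Rmin_l w (e / 2)). pose proof (Rmin_r w (e / 2)).
      pose proof (Rmin_l (eta1 / 2) (Rmin (eta2 / 2) (beta / Kall))).
      pose proof (Rmin_r (eta1 / 2) (Rmin (eta2 / 2) (beta / Kall))).
      pose proof (Rmin_l (eta2 / 2) (beta / Kall)). pose proof (Rmin_r (eta2 / 2) (beta / Kall)).
      lra. }
  destruct Hdl as [Hdl0 [Hdlw [Hdle [Hdle1 [Hdle2 Hdlb]]]]].
  assert (HdK: forall K, 0 <= K <= Kall -> dl * K <= beta).
  { intros K HK. apply (Kle dl K Kall beta HK HKall). lra. }
  destruct (core_all n f1 f2 a2 b1 e c w dl l0 ta tb) as [F [F1 [F2 [HFs [HFd [HF1 [HF2 HFp]]]]]]].
  all: fold D1 D2 C1 C2; fold M1 M2 L W1 W2; fold Kp mm.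
  all: try lra.
  all: try assumption.
  - split; assumption.
  - split; assumption.
  - intros s Hs. destruct (Req_dec s b1) as [->|Hne]. rewrite Rminus_eq_0, Rabs_R0. lra.
    left. apply Hc1. apply Rabs_lt_between. lra.
  - intros s Hs. destruct (Req_dec s a2) as [->|Hne]. rewrite Rminus_eq_0, Rabs_R0. lra.
    left. apply Hc2. apply Rabs_lt_between. lra.
  - split.
    + pose proof (HdK M1 ltac:(unfold Kall; lra)). lra.
    + pose proof (HdK K1 ltac:(unfold Kall; lra)) as HH. unfold K1 in HH. lra.
  - split.
    + pose proof (HdK M2 ltac:(unfold Kall; lra)). lra.
    + pose proof (HdK 2 ltac:(unfold Kall; lra)). lra.
  - pose proof (HdK K3 ltac:(unfold Kall; lra)) as HH. unfold K3 in HH. lra.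
  - pose proof (HdK K3 ltac:(unfold Kall; lra)) as HH. unfold K3 in HH. lra.
  - pose proof (HdK K4 ltac:(unfold Kall; lra)) as HH. unfold K4 in HH. fold g.
    rewrite Rmult_assoc. lra.
  - pose proof (HdK K5 ltac:(unfold Kall; lra)) as HH. unfold K5 in HH. lra.
  -
    set (f := fun t => if Rle_dec t b1 then f1 t else if Rle_dec t a2 then F t else f2 t).
    assert (Ef1: forall t, t <= b1 -> f t = f1 t).
    { intros t Ht. unfold f. destruct (Rle_dec t b1); [reflexivity|lra]. }
    assert (EF: forall t, b1 - e < t < a2 + e -> f t = F t).
    { intros t Ht. unfold f. destruct (Rle_dec t b1). symmetry; apply HF1; lra.
      destruct (Rle_dec t a2). reflexivity. symmetry; apply HF2; lra. }
    assert (Ef2: forall t, a2 <= t -> f t = f2 t).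
    { intros t Ht. unfold f. destruct (Rle_dec t b1). lra.
      destruct (Rle_dec t a2). assert (t = a2) by lra. subst t. apply HF2; lra. reflexivity. }
    assert (Lf1: forall t, t < b1 -> locally t (fun s => f s = f1 s)).
    { intros t Ht. generalize (loc_int (t - 1) b1 t ltac:(lra)). apply filter_imp. intros y Hy. apply Ef1; lra. }
    assert (LF: forall t, b1 - e < t < a2 + e -> locally t (fun s => f s = F s)).
    { intros t Ht. generalize (loc_int (b1 - e) (a2 + e) t Ht). apply filter_imp. intros y Hy. apply EF; lra. }
    assert (Lf2: forall t, a2 < t -> locally t (fun s => f s = f2 s)).
    { intros t Ht. generalize (loc_int a2 (t + 1) t ltac:(lra)). apply filter_imp. intros y Hy. apply Ef2; lra. }
    assert (Hsym: forall (g0 h : R -> R) t, locally t (fun s => g0 s = h s) -> locally t (fun s => h s = g0 s)).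
    { intros g0 h t H. generalize H. apply filter_imp. intros; symmetry; auto. }
    assert (DF: forall t, b1 - e < t < a2 + e -> Derive F t = F1 t).
    { intros t Ht. apply is_derive_unique. apply HFd; auto. }
    assert (DF2: forall t, b1 - e < t < a2 + e -> Derive_n F 2 t = F2 t).
    { intros t Ht. change (Derive (Derive F) t = F2 t).
      rewrite (Derive_ext_loc (Derive F) F1 t).
      apply is_derive_unique. apply HFd; auto.
      generalize (loc_int (b1 - e) (a2 + e) t Ht). apply filter_imp. intros y Hy. apply DF; auto. }
    exists f. split; [|split; [|split; [|split; [|split; [|split; [|split]]]]]].
    + exists (Rmin eps1 eps2). split. apply Rmin_glb_lt; lra.
      intros k x Hx. pose proof (Rmin_l eps1 eps2). pose proof (Rmin_r eps1 eps2).
      destruct (Rlt_dec x b1) as [H1|H1].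
      * apply ex_derive_n_ext_loc with f1. apply Hsym, Lf1; auto. apply Hs1. lra.
      * destruct (Rle_dec x a2) as [H2|H2].
        -- apply ex_derive_n_ext_loc with F. apply Hsym, LF; lra. apply HFs. lra.
        -- apply ex_derive_n_ext_loc with f2. apply Hsym, Lf2; lra. apply Hs2. lra.
    + intros t Ht. destruct (Rlt_dec t b1) as [H1|H1].
      * rewrite Ef1 by lra. apply Hpos1; lra.
      * destruct (Rle_dec t a2) as [H2|H2].
        -- rewrite EF by lra. apply HFp; lra.
        -- rewrite Ef2 by lra. apply Hpos2; lra.
    + intros t Ht. apply Ef1; lra.
    + intros t Ht. apply Ef2; lra.
    + intros t Ht. destruct (Rlt_dec t b1) as [H1|H1].
      * rewrite (ws_loc n f f1 t (Lf1 t H1)). apply Hpsc1; lra.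
      * destruct (Rle_dec t a2) as [H2|H2].
        -- rewrite (ws_loc n f F t (LF t ltac:(lra))).
           destruct (HFp t ltac:(lra)) as [Hp [Ha [Hq Hl]]].
           apply (ws_pos_iff n F t Hn1 Hp). rewrite DF, DF2 by lra. exact Hq.
        -- rewrite (ws_loc n f f2 t (Lf2 t ltac:(lra))). apply Hpsc2; lra.
    + intros t Ht. apply Derive_ext_loc. apply Lf1; auto.
    + intros t Ht. rewrite (Derive_ext_loc f F t (LF t ltac:(lra))). rewrite DF by lra. apply HFp; auto.
    + intros t Ht. apply Derive_ext_loc. apply Lf2; auto.
Qed.

Theorem lemma2p1 (n : nat) (a1 b1 a2 b2 : R) (f1 f2 : R -> R) :
  (2 <= n)%nat ->
  a1 < b1 -> a2 < b2 ->
  smooth_on a1 b1 f1 -> positive_on a1 b1 f1 ->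
  smooth_on a2 b2 f2 -> positive_on a2 b2 f2 ->
  (* (i) *)
  psc_on n a1 b1 f1 -> psc_on n a2 b2 f2 ->
  (* (ii) *)
  f1 b1 < f2 a2 ->
  (* (iii) *)
  Derive f1 b1 < 1 -> 0 < Derive f1 b1 ->
  Derive f2 a2 <= Derive f1 b1 -> -1 < Derive f2 a2 ->
  (* the intervals have been translated as prescribed *)
  (Derive f1 b1 = Derive f2 a2 ->
     (a2 - b1) * Derive f1 b1 = f2 a2 - f1 b1) ->
  (Derive f2 a2 < Derive f1 b1 ->
     (a2 - b1) * Derive f1 b1 > f2 a2 - f1 b1 /\
     f2 a2 - f1 b1 > (a2 - b1) * Derive f2 a2) ->
  (exists f : R -> R,
     smooth_on a1 b2 f /\ positive_on a1 b2 f /\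
     (forall t, a1 <= t <= (a1 + b1) / 2 -> f t = f1 t) /\
     (forall t, (a2 + b2) / 2 <= t <= b2 -> f t = f2 t) /\
     psc_on n a1 b2 f)
  /\
  ((forall t, a1 <= t <= b1 -> 0 < Derive f1 t) ->
   (forall t, a2 <= t <= b2 -> 0 < Derive f2 t) ->
   exists f : R -> R,
     smooth_on a1 b2 f /\ positive_on a1 b2 f /\
     (forall t, a1 <= t <= (a1 + b1) / 2 -> f t = f1 t) /\
     (forall t, (a2 + b2) / 2 <= t <= b2 -> f t = f2 t) /\
     psc_on n a1 b2 f /\
     (forall t, a1 <= t <= b2 -> 0 < Derive f t)).
Proof.
  intros Hn Hab1 Hab2 Hs1 Hp1 Hs2 Hp2 Hc1 Hc2 Hf HD1 HD1' HD12 HD2 Ht1 Ht2.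
  split.
  - destruct (build n a1 b1 a2 b2 f1 f2 ((Derive f2 a2 - 1) / 2) Hn Hab1 Hab2 Hs1 Hp1 Hs2 Hp2 Hc1 Hc2 Hf
      HD1 HD1' HD12 HD2 Ht1 Ht2 ltac:(lra)) as [f [H1 [H2 [H3 [H4 [H5 _]]]]]].
    exists f. auto.
  - intros Hd1 Hd2.
    assert (HD2p: 0 < Derive f2 a2) by (apply Hd2; lra).
    destruct (build n a1 b1 a2 b2 f1 f2 0 Hn Hab1 Hab2 Hs1 Hp1 Hs2 Hp2 Hc1 Hc2 Hf
      HD1 HD1' HD12 HD2 Ht1 Ht2 HD2p) as [f [H1 [H2 [H3 [H4 [H5 [H6 [H7 H8]]]]]]]].
    assert (HL: b1 < a2).
    { destruct (Req_dec (Derive f1 b1) (Derive f2 a2)) as [E|E].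
      - specialize (Ht1 E). nra.
      - destruct (Ht2 ltac:(lra)) as [X Y]. nra. }
    exists f. split; auto. split; auto. split; auto. split; auto. split; auto.
    intros t Ht. destruct (Rlt_dec t b1) as [Ha|Ha].
    + rewrite H6 by auto. apply Hd1; lra.
    + destruct (Rle_dec t a2) as [Hb|Hb].
      * apply H7; lra.
      * rewrite H8 by lra. apply Hd2; lra.
Qed.
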